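(* A strong CCTRS $\mathcal R$ is quasi-decreasing (i.e., every term in $\mathcal T(\mathcal F,\mathcal V)$ is quasi-decreasing) if and only if the context-sensitive TRS $(\Xi(\mathcal R),\mu)$ is terminating on all terms in the set $\{\zeta(s)\mid s\in\mathcal T(\mathcal G,\mathcal V)\}$.
   Context: A CCTRS over $\mathcal F$ is a set $\mathcal R$ of conditional rules each of the form $f(\ell_1,\dots,\ell_n)\to r\Leftarrow a_1\approx b_1,\dots,a_k\approx b_k$ (defined symbols are roots of left-hand sides, others constructors; constructor terms contain only constructors and variables) where $\ell_1,\dots,\ell_n,b_1,\dots,b_k$ are constructor terms, the terms $f(\ell_1,\dots,\ell_n),b_1,\dots,b_k$ pairwise share no variables, $\mathrm{Var}(r)\subseteq\mathrm{Var}(\ell_1,\dots,\ell_n,b_1,\dots,b_k)$, and $\mathrm{Var}(a_i)\subseteq\mathrm{Var}(\ell_1,\dots,\ell_n,b_1,\dots,b_{i-1})$. The rewrite relation: $s\to_{\mathcal R}t$ iff there are a position $p$, a rule and $\sigma$ with $s|_p=\ell\sigma$, $t=s[r\sigma]_p$ and $a_j\sigma\to^*_{\mathcal R}b_j\sigma$ for all $j$ (formally the union of the standard approximations). $\mathcal R{\restriction}f$ is the set of rules with left-hand root $f$. A strong CCTRS is a CCTRS with each $\mathcal R{\restriction}f$ finite and each $f(\ell_1,\dots,\ell_n)$ and $b_j$ linear. Let $m_f=|\mathcal R{\restriction}f|$ (0 for constructors), with fixed enumeration $\rho^f_1,\dots,\rho^f_{m_f}$. Write $s\sqsupset t$ if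 there are a position $p$, a rule, $\sigma$ and $1\le i\le k$ with $s|_p=\ell\sigma$, $a_j\sigma\to^*b_j\sigma$ for $j<i$ and $t=a_i\sigma$; a term $s$ is quasi-decreasing if there is no infinite sequence $s=u_0\,(\to\cup\sqsupset)\,u_1\,(\to\cup\sqsupset)\cdots$. $\mathcal G$ is the labeled signature: constructors of $\mathcal F$ plus symbols $f_R$ (same arity as $f$) for each defined $f$ and $R\subseteq\mathcal R{\restriction}f$. The transformed system: signature $\mathcal H$ with constants $\bot,\top$ ($\mu=\emptyset$); every $f\in\mathcal F$ of arity $n$ as a symbol of arity $n+m_f$ with $\mu(f)=\{1,\dots,n\}$; and for every defined $f$ of arity $n$, every $\rho^f_i$ with $k>0$ conditions and $1\le j\le k$ a symbol $f_i^j$ of arity $n+m_f+j-1$ with $\mu(f_i^j)=\{n+i+j-1\}$. A position is active in $t$ if it is $\epsilon$ or $iq$ with $i\in\mu(\mathrm{root}(t))$ and $q$ active in $t|_i$; $\to_{\Xi(\mathcal R),\mu}$ rewrites only at active positions. $\xi_\star$ ($\star\in\{\bot,\top\}$): identity on variables, homomorphic on constructors, $f(t_1..t_n)\mapsto f(\xi_\star(t_1),\dots,\xi_\star(t_n),\star,\dots,\star)$ ($m_f$ copies) for defined $f$. For a linear constructor term $t$: $\mathrm{AP}(x)=\emptyset$, and $\mathrm{AP}(f(t_1,\dots,t_n))$ consists of $g(x_1,\dots,x_m)$ for every constructor $g\neq f$ of arity $m$, $g(x_1,\dots,x_m,\bot,\dots,\bot)$ for every defined $g$ of arity $m$, and $f(x_1,\dots,x_{i-1},u,x_{i+1},\dots,x_n)$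 for $u\in\mathrm{AP}(t_i)$ (fresh distinct $x$'s). Notation: $\langle t_1,\dots,t_n\rangle[u_1,\dots,u_j]_i$ is $t_1,\dots,t_{i-1},u_1,\dots,u_j,t_{i+1},\dots,t_n$. For the $i$-th rule $\rho_i\colon f(\vec\ell)\to r\Leftarrow a_1\approx b_1,\dots,a_k\approx b_k$ of $\mathcal R{\restriction}f$ and fresh distinct $x_1,\dots,x_{m_f},y_1,\dots,y_n$, $\Xi(\mathcal R)$ contains: $(1)$ if $k=0$: $f(\vec\ell,\langle\vec x\rangle[\top]_i)\to\xi_\top(r)$; if $k>0$: $(2)$ $f(\vec\ell,\langle\vec x\rangle[\top]_i)\to f_i^1(\vec\ell,\langle\vec x\rangle[\xi_\top(a_1)]_i)$, $(3)$ $f_i^k(\vec\ell,\langle\vec x\rangle[b_1,\dots,b_k]_i)\to\xi_\top(r)$, $(4)$ for $1\le j<k$: $f_i^j(\vec\ell,\langle\vec x\rangle[b_1,\dots,b_j]_i)\to f_i^{j+1}(\vec\ell,\langle\vec x\rangle[b_1,\dots,b_j,\xi_\top(a_{j+1})]_i)$, $(5)$ for $1\le j\le k$ and $v\in\mathrm{AP}(b_j)$ (fresh variables): $f_i^j(\vec\ell,\langle\vec x\rangle[b_1,\dots,b_{j-1},v]_i)\to f(\vec\ell,\langle\vec x\rangle[\bot]_i)$; and for any $k$: $(6)$ for $1\le j\le n$ and $v\in\mathrm{AP}(\ell_j)$ (fresh variables): $f(\langle\vec y\rangle[v]_j,\langle\vec x\rangle[\top]_i)\to f(\langle\vec y\rangle[v]_j,\langle\vec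 x\rangle[\bot]_i)$. The map $\zeta\colon\mathcal T(\mathcal G,\mathcal V)\to\mathcal T(\mathcal H,\mathcal V)$: identity on variables, homomorphic on constructors, $\zeta(f_R(t_1,\dots,t_n))=f(\zeta(t_1),\dots,\zeta(t_n),c_1,\dots,c_{m_f})$ with $c_i=\top$ iff $\rho^f_i\in R$, else $\bot$. *)

(* Defs.v *)
From Stdlib Require Import List Relations.
Import ListNotations.
Set Implicit Arguments.

Inductive term (S : Type) : Type :=
| Var (x : nat)
| App (f : S) (ts : list (term S)).
Arguments Var {S} x.
Arguments App {S} f ts.

Fixpoint vars {S} (t : term S) : list nat :=
  match t with
  | Var x => [x]
  | App _ ts => (fix go (l : list (term S)) : list nat :=
                   match l with [] => [] | u :: l' => vars u ++ go l' end) ts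
  end.

Definition linear {S} (t : term S) : Prop := NoDup (vars t).

Fixpoint term_all {S} (P : S -> nat -> Prop) (t : term S) : Prop :=
  match t with
  | Var _ => True
  | App f ts => P f (length ts) /\
      (fix go (l : list (term S)) : Prop :=
         match l with [] => True | u :: l' => term_all P u /\ go l' end) ts
  end.

Fixpoint subst {S} (sigma : nat -> term S) (t : term S) : term S :=
  match t with
  | Var x => sigma x
  | App f ts => App f (map (subst sigma) ts)
  end.

Inductive subterm_eq {S} : term S -> term S -> Prop :=
| st_refl t : subterm_eq t t
| st_arg u f ts t : In t ts -> subterm_eq u t -> subterm_eq u (App f ts).

Inductive ctx {S} (r : term S -> term S -> Prop) : term S -> term S -> Prop :=
| ctx_root s t : r s t -> ctx r s t
| ctx_arg f ss1 s t ss2 :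
    ctx r s t -> ctx r (App f (ss1 ++ s :: ss2)) (App f (ss1 ++ t :: ss2)).

(* closure under contexts at active positions only (positions 1-based) *)
Inductive csctx {S} (mu : S -> nat -> bool) (r : term S -> term S -> Prop)
  : term S -> term S -> Prop :=
| csctx_root s t : r s t -> csctx mu r s t
| csctx_arg f ss1 s t ss2 :
    mu f (Datatypes.S (length ss1)) = true ->
    csctx mu r s t -> csctx mu r (App f (ss1 ++ s :: ss2)) (App f (ss1 ++ t :: ss2)).

Record crule (F : Type) := CRule {
  cr_lhs : term F;
  cr_rhs : term F;
  cr_conds : list (term F * term F)
}.
Arguments CRule {F}.

(* <t_1..t_n>[u_1..u_j]_i  (i is 1-based) *)
Definition repl {A} (ts : list A) (i : nat) (us : list A) : list A :=
  firstn (i - 1) ts ++ us ++ skipn i ts.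

Section CCTRS.
Context {F : Type} (arity : F -> nat) (rules : F -> list (crule F)).
(* rules f is the fixed enumeration rho^f_1, ..., rho^f_{m_f} of R|f;
   R is the union over f of the rules f.  f is defined iff rules f <> []. *)

Definition m (f : F) : nat := length (rules f).
Definition is_constructor (f : F) : Prop := rules f = [].

Definition wf (t : term F) : Prop := term_all (fun f n => n = arity f) t.
Definition constructor_term (t : term F) : Prop :=
  term_all (fun f n => n = arity f /\ is_constructor f) t.

Definition in_R (rho : crule F) : Prop := exists f, In rho (rules f).

Definition strong_cctrs : Prop :=
  forall f, NoDup (rules f) /\
  forall rho, In rho (rules f) ->
    let l := cr_lhs rho in
    let cs := cr_conds rho in
    let bs := map snd cs in
    (exists ls, l = App f ls /\ Forall constructor_term ls) /\
    wf l /\ wf (cr_rhs rho) /\ Forall (fun c => wf (fst c) /\ wf (snd c)) cs /\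
    Forall constructor_term bs /\
    (* f(l_1..l_n), b_1, ..., b_k pairwise share no variables *)
    (forall i j x, i < j < length (l :: bs) ->
        In x (vars (nth i (l :: bs) l)) -> ~ In x (vars (nth j (l :: bs) l))) /\
    incl (vars (cr_rhs rho)) (vars l ++ flat_map vars bs) /\
    (forall i, i < length cs ->
        incl (vars (fst (nth i cs (l, l)))) (vars l ++ flat_map vars (firstn i bs))) /\
    (* strong: linear lhs and linear b_j *)
    linear l /\ Forall linear bs.

Definition root_rel (Q : term F -> term F -> Prop) (s t : term F) : Prop :=
  exists rho sigma, in_R rho /\
    s = subst sigma (cr_lhs rho) /\ t = subst sigma (cr_rhs rho) /\
    Forall (fun c => Q (subst sigma (fst c)) (subst sigma (snd c))) (cr_conds rho).

Fixpoint approx (n : nat) : term F -> term F -> Prop :=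
  match n with
  | 0 => fun _ _ => False
  | S n' => ctx (root_rel (clos_refl_trans _ (approx n')))
  end.

Definition step (s t : term F) : Prop := exists n, approx n s t.

Definition sqsup (s t : term F) : Prop :=
  exists u rho sigma i, subterm_eq u s /\ in_R rho /\
    u = subst sigma (cr_lhs rho) /\ i < length (cr_conds rho) /\
    (forall j, j < i ->
       clos_refl_trans _ step (subst sigma (fst (nth j (cr_conds rho) (Var 0, Var 0))))
                              (subst sigma (snd (nth j (cr_conds rho) (Var 0, Var 0))))) /\
    t = subst sigma (fst (nth i (cr_conds rho) (Var 0, Var 0))).

Definition quasi_decreasing_term (s : term F) : Prop :=
  ~ exists u : nat -> term F, u 0 = s /\
      forall k, step (u k) (u (S k)) \/ sqsup (u k) (u (S k)).

Definition quasi_decreasing : Prop :=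
  forall s, wf s -> quasi_decreasing_term s.

Inductive Gsym : Type :=
| GC (f : F)
| GD (f : F) (R : list bool).  (* f_R, R ⊆ R|f given by its characteristic
                                  vector w.r.t. rho^f_1..rho^f_{m_f} *)

Definition wfG (t : term Gsym) : Prop :=
  term_all (fun g n => match g with
                       | GC f => is_constructor f /\ n = arity f
                       | GD f R => ~ is_constructor f /\ length R = m f /\ n = arity f
                       end) t.

Inductive Hsym : Type :=
| HBot | HTop
| HF (f : F)                     (* f with arity n + m_f *)
| HAux (f : F) (i j : nat).      (* f_i^j, i and j 1-based *)

Definition mu (g : Hsym) (p : nat) : bool :=
  match g with
  | HBot | HTop => false
  | HF f => Nat.leb 1 p && Nat.leb p (arity f)
  | HAux f i j => Nat.eqb p (arity f + i + j - 1)
  end.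

Definition bot : term Hsym := App HBot [].
Definition top : term Hsym := App HTop [].

Fixpoint xi (star : term Hsym) (t : term F) : term Hsym :=
  match t with
  | Var x => Var x
  | App f ts => App (HF f) (map (xi star) ts ++ repeat star (m f))
  end.

Fixpoint zeta (t : term Gsym) : term Hsym :=
  match t with
  | Var x => Var x
  | App (GC f) ts => App (HF f) (map zeta ts)
  | App (GD f R) ts => App (HF f) (map zeta ts ++ map (fun b : bool => if b then top else bot) R)
  end.

(* AP(t): shapes; the freshness/distinctness of the variables is imposed
   by requiring the left-hand sides of Xi(R) to be linear. *)
Inductive AP : term F -> term Hsym -> Prop :=
| AP_con f ts g xs : is_constructor g -> g <> f -> length xs = arity g ->
    AP (App f ts) (App (HF g) (map Var xs))
| AP_def f ts g xs : ~ is_constructor g -> length xs = arity g ->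
    AP (App f ts) (App (HF g) (map Var xs ++ repeat bot (m g)))
| AP_arg f ts1 t ts2 u xs1 xs2 : AP t u ->
    length xs1 = length ts1 -> length xs2 = length ts2 ->
    AP (App f (ts1 ++ t :: ts2)) (App (HF f) (map Var xs1 ++ u :: map Var xs2)).

Definition cnth (cs : list (term F * term F)) (j : nat) : term F * term F :=
  nth (j - 1) cs (Var 0, Var 0).   (* j-th condition, 1-based *)

(* Xi(R): the rules generated from the i-th rule of R|f (i 1-based) *)
Definition xi_rule (l r : term Hsym) : Prop :=
  linear l /\
  exists f i rho ls xs,
    1 <= i /\ nth_error (rules f) (i - 1) = Some rho /\
    cr_lhs rho = App f ls /\ length xs = m f /\
    let L := map (xi top) ls in
    let X := map (@Var Hsym) xs in
    let cs := cr_conds rho in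
    let k := length cs in
    let B := map (fun c => xi top (snd c)) cs in
    (
      (k = 0 /\ l = App (HF f) (L ++ repl X i [top]) /\ r = xi top (cr_rhs rho))
    \/
      (0 < k /\ l = App (HF f) (L ++ repl X i [top]) /\
       r = App (HAux f i 1) (L ++ repl X i [xi top (fst (cnth cs 1))]))
    \/
      (0 < k /\ l = App (HAux f i k) (L ++ repl X i B) /\ r = xi top (cr_rhs rho))
    \/
      (exists j, 1 <= j < k /\
        l = App (HAux f i j) (L ++ repl X i (firstn j B)) /\
        r = App (HAux f i (S j))
              (L ++ repl X i (firstn j B ++ [xi top (fst (cnth cs (S j)))])))
    \/
      (exists j v, 1 <= j <= k /\ AP (snd (cnth cs j)) v /\
        l = App (HAux f i j) (L ++ repl X i (firstn (j - 1) B ++ [v])) /\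
        r = App (HF f) (L ++ repl X i [bot]))
    \/
      (exists ys j v, length ys = length ls /\ 1 <= j <= length ls /\
        AP (nth (j - 1) ls (Var 0)) v /\
        l = App (HF f) (repl (map (@Var Hsym) ys) j [v] ++ repl X i [top]) /\
        r = App (HF f) (repl (map (@Var Hsym) ys) j [v] ++ repl X i [bot]))).

Definition xi_root (s t : term Hsym) : Prop :=
  exists l r sigma, xi_rule l r /\ s = subst sigma l /\ t = subst sigma r.

Definition cs_step : term Hsym -> term Hsym -> Prop := csctx mu xi_root.

Definition cs_terminating_on (P : term Hsym -> Prop) : Prop :=
  forall t, P t -> ~ exists u : nat -> term Hsym, u 0 = t /\
      forall k, cs_step (u k) (u (S k)).

End CCTRS.

(* Main.v *)
Require Import Defs.
From Stdlib Require Import List Relations Wellfounded Lia Arith Classical ClassicalEpsilon Permutation.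
Import ListNotations.
Set Implicit Arguments.

Section Gen.
Context {S : Type}.

Lemma term_ind2 (P : term S -> Prop) :
  (forall x, P (Var x)) ->
  (forall f ts, (forall t, In t ts -> P t) -> P (App f ts)) ->
  forall t, P t.
Proof.
  intros HV HA. fix IH 1. intros [x|f ts].
  - apply HV.
  - apply HA. induction ts as [|u ts IHts]; simpl; intros t Ht.
    + destruct Ht.
    + destruct Ht as [<-|Ht]; [apply IH|apply IHts; exact Ht].
Qed.

Lemma vars_App (f : S) ts : vars (App f ts) = flat_map vars ts.
Proof. simpl. induction ts; simpl; congruence. Qed.

Lemma term_all_App P (f : S) ts :
  term_all P (App f ts) <-> P f (length ts) /\ Forall (term_all P) ts.
Proof.
  simpl. split; intros [H1 H2]; split; auto; clear H1.
  - induction ts; simpl in *; auto. destruct H2; constructor; auto.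
  - induction ts; simpl in *; auto. inversion H2; subst; split; auto. apply IHts; auto.
Qed.

Lemma subst_ext (s1 s2 : nat -> term S) t :
  (forall x, In x (vars t) -> s1 x = s2 x) -> subst s1 t = subst s2 t.
Proof.
  induction t using term_ind2; intros Hx.
  - apply Hx. simpl; auto.
  - simpl. f_equal. apply map_ext_in. intros u Hu. apply H; auto.
    intros x Hxu. apply Hx. rewrite vars_App, in_flat_map. eauto.
Qed.

Lemma subst_agree (s1 s2 : nat -> term S) t :
  subst s1 t = subst s2 t -> forall x, In x (vars t) -> s1 x = s2 x.
Proof.
  induction t using term_ind2; intros E y Hy.
  - simpl in *. destruct Hy as [<-|[]]; auto.
  - rewrite vars_App, in_flat_map in Hy. destruct Hy as [u [Hu Hy]].
    simpl in E. injection E as E.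
    apply (H u Hu); auto.
    clear -E Hu. induction ts; simpl in *; [destruct Hu|].
    injection E as E1 E2. destruct Hu as [<-|Hu]; auto.
Qed.

Lemma subst_comp (s1 s2 : nat -> term S) t :
  subst s1 (subst s2 t) = subst (fun x => subst s1 (s2 x)) t.
Proof.
  induction t using term_ind2; simpl; auto. f_equal. rewrite map_map.
  apply map_ext_in; auto.
Qed.

Lemma subst_var t : subst (@Var S) t = t.
Proof.
  induction t using term_ind2; simpl; auto. f_equal.
  rewrite <- (map_id ts) at 2. apply map_ext_in; auto.
Qed.

Lemma subterm_trans (a b c : term S) : subterm_eq a b -> subterm_eq b c -> subterm_eq a c.
Proof. intros H1 H2. induction H2; auto. econstructor; eauto. Qed.

Lemma subterm_var (sg : nat -> term S) t x :
  In x (vars t) -> subterm_eq (sg x) (subst sg t).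
Proof.
  induction t using term_ind2; intros Hx.
  - simpl in Hx. destruct Hx as [<-|[]]. constructor.
  - rewrite vars_App, in_flat_map in Hx. destruct Hx as [u [Hu Hx]].
    simpl. econstructor. apply in_map; eauto. auto.
Qed.

Lemma term_all_subterm P (u t : term S) :
  subterm_eq u t -> term_all P t -> term_all P u.
Proof.
  induction 1; auto. intros Ht. apply IHsubterm_eq.
  apply term_all_App in Ht. destruct Ht as [_ Ht]. rewrite Forall_forall in Ht; auto.
Qed.

Lemma term_all_subst P (sg : nat -> term S) t :
  term_all P t -> (forall x, In x (vars t) -> term_all P (sg x)) ->
  term_all P (subst sg t).
Proof.
  induction t using term_ind2; intros Ht Hx.
  - apply Hx. simpl; auto.
  - simpl subst. apply term_all_App in Ht. destruct Ht as [Hf Ht].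
    apply term_all_App. rewrite length_map. split; auto.
    rewrite Forall_forall in *. intros u Hu. apply in_map_iff in Hu.
    destruct Hu as [v [<- Hv]]. apply H; auto.
    intros x Hxv. apply Hx. rewrite vars_App, in_flat_map; eauto.
Qed.

Lemma term_all_subst_var P (sg : nat -> term S) t x :
  term_all P (subst sg t) -> In x (vars t) -> term_all P (sg x).
Proof. intros H Hx. eapply term_all_subterm; [apply subterm_var; eauto|auto]. Qed.

Lemma app_eq_len {A} (a b a' b' : list A) :
  length a = length a' -> a ++ b = a' ++ b' -> a = a' /\ b = b'.
Proof.
  revert a'. induction a; destruct a'; simpl; intros; try discriminate; auto.
  injection H as H. injection H0 as -> H0. destruct (IHa a' H H0); subst; auto.
Qed.

End Gen.

Lemma firstn_S_last {A} (l : list A) j d : j < length l ->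
  firstn (S j) l = firstn j l ++ [nth j l d].
Proof.
  revert l; induction j; destruct l; simpl; intros; try lia; auto.
  f_equal. apply IHj. lia.
Qed.

Lemma not_chain_Acc {A} (R : A -> A -> Prop) x :
  ~ (exists u : nat -> A, u 0 = x /\ forall k, R (u k) (u (S k))) ->
  Acc (fun a b => R b a) x.
Proof.
  intros Hn. apply NNPP. intros HA. apply Hn.
  assert (Hnext : forall y : {y | ~ Acc (fun a b => R b a) y},
            {z : {y | ~ Acc (fun a b => R b a) y} | R (proj1_sig y) (proj1_sig z)}).
  { intros [y Hy]. apply constructive_indefinite_description.
    apply NNPP. intros Hc. apply Hy. constructor. intros z Hz.
    apply NNPP. intros Hz'. apply Hc. exists (exist _ z Hz'). simpl. auto. }
  set (g := fun y => proj1_sig (Hnext y)).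
  exists (fun k => proj1_sig (Nat.iter k g (exist _ x HA))). split; auto.
  intros k. cbn [Nat.iter]. unfold g.
  exact (proj2_sig (Hnext (Nat.iter k g (exist _ x HA)))).
Qed.

Section F1.
Context {F : Type} (arity : F -> nat) (rules : F -> list (crule F)).

Lemma ctx_mono (r1 r2 : term F -> term F -> Prop) :
  (forall a b, r1 a b -> r2 a b) -> forall a b, ctx r1 a b -> ctx r2 a b.
Proof. intros H a b Hc. induction Hc; [apply ctx_root|apply ctx_arg]; auto. Qed.

Lemma rt_mono {A} (r1 r2 : A -> A -> Prop) :
  (forall a b, r1 a b -> r2 a b) -> forall a b, clos_refl_trans _ r1 a b -> clos_refl_trans _ r2 a b.
Proof. intros H a b Hc. induction Hc; eauto using rt_step, rt_refl, rt_trans. Qed.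

Lemma root_rel_mono (Q1 Q2 : term F -> term F -> Prop) :
  (forall a b, Q1 a b -> Q2 a b) -> forall a b, root_rel rules Q1 a b -> root_rel rules Q2 a b.
Proof.
  intros H a b [rho [sg [H1 [H2 [H3 H4]]]]]. exists rho, sg. repeat split; auto.
  eapply Forall_impl; [|exact H4]. simpl; auto.
Qed.

Lemma approx_S n a b : approx rules n a b -> approx rules (S n) a b.
Proof.
  revert a b. induction n; intros a b H; [destruct H|].
  change (ctx (root_rel rules (clos_refl_trans _ (approx rules n))) a b) in H.
  change (ctx (root_rel rules (clos_refl_trans _ (approx rules (S n)))) a b).
  eapply ctx_mono; [|exact H]. apply root_rel_mono. apply rt_mono. auto.
Qed.

Lemma approx_le n n' a b : n <= n' -> approx rules n a b -> approx rules n' a b.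
Proof. induction 1; auto using approx_S. Qed.

Lemma rt_step_approx a b : clos_refl_trans _ (step rules) a b ->
  exists n, clos_refl_trans _ (approx rules n) a b.
Proof.
  induction 1.
  - destruct H as [n Hn]. exists n. apply rt_step; auto.
  - exists 0. apply rt_refl.
  - destruct IHclos_refl_trans1 as [n1 H1], IHclos_refl_trans2 as [n2 H2].
    exists (Nat.max n1 n2). apply rt_trans with y.
    + eapply rt_mono; [|exact H1]. intros; eapply approx_le; [|eauto]; lia.
    + eapply rt_mono; [|exact H2]. intros; eapply approx_le; [|eauto]; lia.
Qed.

Lemma Forall_rt_max (sg : nat -> term F) (cs : list (term F * term F)) :
  Forall (fun c => clos_refl_trans _ (step rules) (subst sg (fst c)) (subst sg (snd c))) cs ->
  exists n, Forall (fun c => clos_refl_trans _ (approx rules n) (subst sg (fst c)) (subst sg (snd c))) cs.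
Proof.
  induction 1. - exists 0; auto.
  - destruct IHForall as [n2 H2]. destruct (rt_step_approx H) as [n1 H1].
    exists (Nat.max n1 n2). constructor.
    + eapply rt_mono; [|exact H1]. intros; eapply approx_le; [|eauto]; lia.
    + eapply Forall_impl; [|exact H2]. intros c Hc. eapply rt_mono; [|exact Hc].
      intros; eapply approx_le; [|eauto]; lia.
Qed.

Lemma step_root rho (sg : nat -> term F) :
  in_R rules rho ->
  Forall (fun c => clos_refl_trans _ (step rules) (subst sg (fst c)) (subst sg (snd c))) (cr_conds rho) ->
  step rules (subst sg (cr_lhs rho)) (subst sg (cr_rhs rho)).
Proof.
  intros HR HF. edestruct Forall_rt_max as [n Hn]; [exact HF|]. exists (S n).
  apply ctx_root. exists rho, sg. auto.
Qed.

Lemma step_ctx f ss1 s t ss2 : step rules s t ->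
  step rules (App f (ss1 ++ s :: ss2)) (App f (ss1 ++ t :: ss2)).
Proof.
  intros [n Hn]. exists n. destruct n; [destruct Hn|]. apply ctx_arg. exact Hn.
Qed.

Lemma step_sub u s t : subterm_eq u s -> step rules u t ->
  exists s', step rules s s' /\ subterm_eq t s'.
Proof.
  induction 1; intros Hs.
  - exists t. split; auto. constructor.
  - destruct (IHsubterm_eq Hs) as [s' [H1 H2]].
    destruct (in_split _ _ H) as [l1 [l2 ->]].
    exists (App f (l1 ++ s' :: l2)). split. apply step_ctx; auto.
    econstructor; [|exact H2]. apply in_or_app; simpl; auto.
Qed.

Lemma sqsup_sub u s t : subterm_eq u s -> sqsup rules u t -> sqsup rules s t.
Proof.
  intros Hu [w [rho [sg [i [H1 H]]]]]. exists w, rho, sg, i. split; auto.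
  eapply subterm_trans; eauto.
Qed.

End F1.

Section H1.
Context {F : Type} (arity : F -> nat) (rules : F -> list (crule F)).
Local Notation H := (term (@Hsym F)).
Local Notation X := (xi rules top).

Lemma subst_top (sg : nat -> H) : subst sg top = top.
Proof. reflexivity. Qed.
Lemma subst_bot (sg : nat -> H) : subst sg bot = bot.
Proof. reflexivity. Qed.

Lemma map_repeat_const {A B} (g : A -> B) a n : map g (repeat a n) = repeat (g a) n.
Proof. induction n; simpl; congruence. Qed.

Lemma xi_subst (sg : nat -> term F) t :
  X (subst sg t) = subst (fun x => X (sg x)) (X t).
Proof.
  induction t using term_ind2; simpl; auto. f_equal.
  rewrite map_app, !map_map, map_repeat_const. f_equal. apply map_ext_in; auto.
Qed.

Lemma flat_map_vars_repeat_top n : flat_map (@vars (@Hsym F)) (repeat top n) = [].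
Proof. induction n; simpl; auto. Qed.

Lemma vars_xi t : vars (X t) = vars t.
Proof.
  induction t using term_ind2; [reflexivity|]. simpl xi.
  rewrite vars_App, (vars_App f), flat_map_app, flat_map_vars_repeat_top, app_nil_r.
  rewrite !flat_map_concat_map, map_map. f_equal. apply map_ext_in. auto.
Qed.

Lemma map_repl {A B} (g : A -> B) l i us :
  map g (repl l i us) = repl (map g l) i (map g us).
Proof. unfold repl. rewrite !map_app, firstn_map, skipn_map. auto. Qed.

Lemma length_repl {A} (l : list A) i us : 1 <= i <= length l ->
  length (repl l i us) = length l - 1 + length us.
Proof.
  intros Hi. unfold repl. rewrite !length_app, length_firstn, length_skipn. lia.
Qed.

Lemma firstn_repeat' {A} (a : A) k n : firstn k (repeat a n) = repeat a (Nat.min k n).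
Proof. revert n; induction k; destruct n; simpl; auto. f_equal; auto. Qed.
Lemma skipn_repeat' {A} (a : A) k n : skipn k (repeat a n) = repeat a (n - k).
Proof. revert n; induction k; destruct n; simpl; auto. Qed.

Lemma repl_repeat {A} (a : A) n i : 1 <= i <= n -> repl (repeat a n) i [a] = repeat a n.
Proof.
  intros Hi. unfold repl. rewrite firstn_repeat', skipn_repeat'.
  replace n with (Nat.min (i-1) n + (1 + (n - i))) at 3 by lia.
  rewrite !repeat_app. reflexivity.
Qed.

Lemma flat_map_vars_Var (l : list nat) : flat_map (@vars (@Hsym F)) (map Var l) = l.
Proof. induction l; simpl; congruence. Qed.

Inductive actx (w : H) : H -> Prop :=
| ax_here : actx w w
| ax_arg g ss1 t ss2 : mu arity g (S (length ss1)) = true -> actx w t ->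
    actx w (App g (ss1 ++ t :: ss2)).

Lemma actx_trans w t u : actx w t -> actx t u -> actx w u.
Proof. intros H1 H2. induction H2; auto. constructor; auto. Qed.

Lemma actx_step w w' T : actx w T -> cs_step arity rules w w' ->
  exists T', actx w' T' /\ cs_step arity rules T T'.
Proof.
  induction 1; intros Hs.
  - exists w'. split; [constructor|auto].
  - destruct (IHactx Hs) as [T' [H1 H2]]. exists (App g (ss1 ++ T' :: ss2)).
    split. constructor; auto. apply csctx_arg; auto.
Qed.

Lemma actx_rt w w' T : actx w T -> clos_refl_trans _ (cs_step arity rules) w w' ->
  exists T', actx w' T' /\ clos_refl_trans _ (cs_step arity rules) T T'.
Proof.
  intros HT Hr. revert T HT. induction Hr; intros T HT.
  - destruct (actx_step HT H) as [T' [? ?]]. exists T'; split; auto. apply rt_step; auto.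
  - exists T; split; auto. apply rt_refl.
  - destruct (IHHr1 T HT) as [T1 [A1 B1]]. destruct (IHHr2 T1 A1) as [T2 [A2 B2]].
    exists T2; split; auto. eapply rt_trans; eauto.
Qed.

Lemma actx_ct w w' T : actx w T -> clos_trans _ (cs_step arity rules) w w' ->
  exists T', actx w' T' /\ clos_trans _ (cs_step arity rules) T T'.
Proof.
  intros HT Hr. revert T HT. induction Hr; intros T HT.
  - destruct (actx_step HT H) as [T' [? ?]]. exists T'; split; auto. apply t_step; auto.
  - destruct (IHHr1 T HT) as [T1 [A1 B1]]. destruct (IHHr2 T1 A1) as [T2 [A2 B2]].
    exists T2; split; auto. eapply t_trans; eauto.
Qed.

Lemma wf_xi_actx u w : wf arity u -> subterm_eq w u -> actx (X w) (X u).
Proof.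
  intros Hw Hs. induction Hs as [|w f ts t Hin Hs IHHs]. - constructor.
  - destruct (in_split _ _ Hin) as [l1 [l2 ->]].
    unfold wf in Hw. apply term_all_App in Hw. destruct Hw as [Hl Hw].
    simpl. rewrite map_app. simpl. rewrite <- app_assoc. simpl.
    constructor.
    + unfold mu. rewrite length_map. rewrite length_app in Hl. simpl in Hl.
      apply andb_true_intro; split; apply Nat.leb_le; lia.
    + apply IHHs. rewrite Forall_forall in Hw. apply Hw. apply in_or_app; simpl; auto.
Qed.

End H1.

Section R.
Context {F : Type} (arity : F -> nat) (rules : F -> list (crule F)).
Hypothesis Hs : strong_cctrs arity rules.
Local Notation H := (term (@Hsym F)).
Local Notation X := (xi rules top).
Local Notation wf := (wf arity).

Definition bsof (rho : crule F) := map snd (cr_conds rho).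

Lemma rule_info f rho : In rho (rules f) ->
  exists ls, cr_lhs rho = App f ls /\ Forall (constructor_term arity rules) ls /\
  wf (cr_lhs rho) /\ wf (cr_rhs rho) /\
  Forall (fun c => wf (fst c) /\ wf (snd c)) (cr_conds rho) /\
  Forall (constructor_term arity rules) (bsof rho) /\
  NoDup (vars (cr_lhs rho) ++ flat_map vars (bsof rho)) /\
  incl (vars (cr_rhs rho)) (vars (cr_lhs rho) ++ flat_map vars (bsof rho)) /\
  (forall i, i < length (cr_conds rho) ->
     incl (vars (fst (nth i (cr_conds rho) (Var 0, Var 0))))
          (vars (cr_lhs rho) ++ flat_map vars (firstn i (bsof rho)))).
Proof.
  intros Hin. destruct (Hs f) as [_ Hr]. specialize (Hr rho Hin). cbv zeta in Hr.
  destruct Hr as [[ls [Hl Hc]] [Hwl [Hwr [Hwc [Hcb [Hdis [Hinr [Hina [Hlin Hlinb]]]]]]]]].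
  exists ls. unfold bsof. repeat split; auto.
  - set (l := cr_lhs rho) in *. set (bs := map snd (cr_conds rho)) in *.
    change (NoDup (flat_map vars (l :: bs))).
    assert (Hall : forall t, In t (l :: bs) -> NoDup (vars t)).
    { intros t [<-|Ht]; auto. rewrite Forall_forall in Hlinb; apply Hlinb; auto. }
    clear -Hall Hdis. generalize dependent (l :: bs). intros L Hdis Hall.
    induction L as [|a L IH]; simpl; [constructor|].
    apply NoDup_app.
    + apply Hall; simpl; auto.
    + apply IH. intros i j x Hij H1. apply (Hdis (S i) (S j) x); simpl; auto; lia.
      intros t Ht; apply Hall; simpl; auto.
    + intros x Hx Hx'. apply in_flat_map in Hx'. destruct Hx' as [t [Ht Hxt]].
      destruct (In_nth _ _ l Ht) as [j [Hj Hn]].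
      apply (Hdis 0 (S j) x); simpl; auto; try lia. rewrite Hn. auto.
  - intros i Hi. rewrite (nth_indep _ _ (cr_lhs rho, cr_lhs rho)); auto.
Qed.

Lemma nodup_prefix_bs (l : term F) (bs : list (term F)) j :
  NoDup (vars l ++ flat_map vars bs) -> NoDup (vars l ++ flat_map vars (firstn j bs)).
Proof.
  intros Hn. rewrite <- (firstn_skipn j bs) in Hn. rewrite flat_map_app, app_assoc in Hn.
  eapply NoDup_app_remove_r; eauto.
Qed.

Lemma incl_prefix_bs (l : term F) (bs : list (term F)) j :
  incl (vars l ++ flat_map vars (firstn j bs)) (vars l ++ flat_map vars bs).
Proof.
  rewrite <- (firstn_skipn j bs) at 2. rewrite flat_map_app. intros x Hx.
  apply in_app_or in Hx. apply in_or_app. destruct Hx; auto. right; apply in_or_app; auto.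
Qed.

Lemma in_list_max x l : In x l -> x <= list_max l.
Proof.
  intros Hx. pose proof (proj1 (list_max_le l (list_max l)) (le_n _)) as H.
  rewrite Forall_forall in H; auto.
Qed.

Lemma lin_pat g ls (us : list H) C N mf i :
  NoDup (flat_map vars ls ++ C) -> (forall x, In x (flat_map vars ls ++ C) -> x < N) ->
  flat_map vars us = C -> 1 <= i <= mf ->
  linear (App g (map X ls ++ repl (map Var (seq N mf)) i us)).
Proof.
  intros Hnd HN HC Hi. unfold linear. rewrite vars_App, flat_map_app.
  unfold repl. rewrite !flat_map_app, HC, firstn_map, skipn_map, !flat_map_vars_Var.
  replace (flat_map vars (map X ls)) with (flat_map vars ls).
  2:{ rewrite !flat_map_concat_map, map_map. f_equal. apply map_ext. intros; symmetry; apply vars_xi. }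
  set (A := flat_map vars ls) in *.
  set (B1 := firstn (i - 1) (seq N mf)). set (B2 := skipn i (seq N mf)).
  assert (HB : NoDup (B1 ++ B2) /\ forall x, In x (B1 ++ B2) -> N <= x).
  { assert (Hsq : seq N mf = B1 ++ (N + (i-1)) :: B2).
    { unfold B1, B2. assert (E : skipn i (seq N mf) = skipn (S (i-1)) (seq N mf))
        by (f_equal; lia). rewrite E. symmetry.
      apply firstn_skipn_middle. rewrite nth_error_seq.
      replace (Nat.ltb (i-1) mf) with true; auto. symmetry; apply Nat.ltb_lt; lia. }
    split.
    - eapply NoDup_remove_1. rewrite <- Hsq. apply seq_NoDup.
    - intros x Hx. assert (In x (seq N mf)) as Hx'.
      { rewrite Hsq. apply in_app_or in Hx. apply in_or_app. simpl. tauto. }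
      apply in_seq in Hx'. lia. }
  destruct HB as [HB1 HB2].
  assert (Hp : Permutation (A ++ B1 ++ C ++ B2) ((A ++ C) ++ (B1 ++ B2))).
  { rewrite <- !app_assoc. apply Permutation_app_head.
    rewrite !app_assoc. apply Permutation_app_tail. apply Permutation_app_comm. }
  eapply Permutation_NoDup; [symmetry; exact Hp|].
  apply NoDup_app; auto. intros x Hx Hx'. specialize (HN x Hx). specialize (HB2 x Hx'). lia.
Qed.

End R.

Lemma in_firstn' {A} (x : A) n l : In x (firstn n l) -> In x l.
Proof. intros H. rewrite <- (firstn_skipn n l). apply in_or_app; auto. Qed.
Lemma in_skipn' {A} (x : A) n l : In x (skipn n l) -> In x l.
Proof. intros H. rewrite <- (firstn_skipn n l). apply in_or_app; auto. Qed.

Section R2.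
Context {F : Type} (arity : F -> nat) (rules : F -> list (crule F)).
Hypothesis Hs : strong_cctrs arity rules.
Local Notation H := (term (@Hsym F)).
Local Notation X := (xi rules top).
Local Notation wf := (wf arity).
Local Notation cs_step := (cs_step arity rules).

Definition Lsg (sg : nat -> term F) ls := map (fun l => X (subst sg l)) ls.
Definition Bsg (sg : nat -> term F) (cs : list (term F * term F)) :=
  map (fun c => X (subst sg (snd c))) cs.
Definition asg (sg : nat -> term F) (cs : list (term F * term F)) j :=
  X (subst sg (fst (nth j cs (Var 0, Var 0)))).

Variables (f : F) (p0 : nat) (rho : crule F) (ls : list (term F)).
Hypothesis Hnth : nth_error (rules f) p0 = Some rho.
Hypothesis Hlhs : cr_lhs rho = App f ls.

Let cs := cr_conds rho.
Let V := vars (cr_lhs rho) ++ flat_map vars (bsof rho).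
Let N := S (list_max V).
Let xs := seq N (m rules f).
Definition tau (sg : nat -> term F) (x : nat) : H := if Nat.ltb x N then X (sg x) else top.

Lemma Hin : In rho (rules f).
Proof. eapply nth_error_In; eauto. Qed.
Lemma Hp0 : p0 < m rules f.
Proof. unfold m. apply nth_error_Some. rewrite Hnth. discriminate. Qed.

Lemma V_lt x : In x V -> x < N.
Proof. intros Hx. unfold N. apply in_list_max in Hx. lia. Qed.

Lemma tau_X sg t : incl (vars t) V -> subst (tau sg) (X t) = X (subst sg t).
Proof.
  intros Hv. rewrite xi_subst. apply subst_ext. intros x Hx. rewrite vars_xi in Hx.
  unfold tau. replace (Nat.ltb x N) with true; auto. symmetry. apply Nat.ltb_lt.
  apply V_lt; auto.
Qed.

Lemma tau_L sg : map (subst (tau sg)) (map X ls) = Lsg sg ls.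
Proof.
  unfold Lsg. rewrite map_map. apply map_ext_in. intros l Hl. apply tau_X.
  intros x Hx. unfold V. apply in_or_app. left. rewrite Hlhs, vars_App, in_flat_map. eauto.
Qed.

Lemma tau_xs sg : map (subst (tau sg)) (map Var xs) = repeat top (m rules f).
Proof.
  rewrite map_map. unfold xs. assert (Hg : forall a n, N <= a ->
    map (fun x => subst (tau sg) (Var x)) (seq a n) = repeat top n).
  2: apply Hg; auto.
  intros a n. revert a.
  induction n; intros a Ha; simpl; auto. f_equal.
  - unfold tau. replace (Nat.ltb a N) with false; auto. symmetry. apply Nat.ltb_ge. lia.
  - apply IHn. lia.
Qed.

Lemma tau_B sg j : map (subst (tau sg)) (firstn j (map (fun c => X (snd c)) cs)) = Bsg sg (firstn j cs).
Proof.
  rewrite firstn_map, map_map. unfold Bsg. apply map_ext_in. intros c Hc. apply tau_X.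
  intros x Hx. unfold V. apply in_or_app. right. unfold bsof. apply in_flat_map.
  exists (snd c). split; auto. apply in_map. apply (in_firstn' _ j). exact Hc.
Qed.

Lemma tau_a sg j : j < length cs -> subst (tau sg) (X (fst (nth j cs (Var 0, Var 0)))) = asg sg cs j.
Proof.
  intros Hj. apply tau_X. destruct (@rule_info _ arity rules Hs f rho Hin) as [ls' [_ [_ [_ [_ [_ [_ [_ [_ Ha]]]]]]]]].
  intros x Hx. apply (incl_prefix_bs _ _ j). apply Ha; auto.
Qed.


Lemma info : exists ls', cr_lhs rho = App f ls' /\ Forall (constructor_term arity rules) ls' /\
  wf (cr_lhs rho) /\ wf (cr_rhs rho) /\
  Forall (fun c => wf (fst c) /\ wf (snd c)) (cr_conds rho) /\
  Forall (constructor_term arity rules) (bsof rho) /\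
  NoDup (vars (cr_lhs rho) ++ flat_map vars (bsof rho)) /\
  incl (vars (cr_rhs rho)) (vars (cr_lhs rho) ++ flat_map vars (bsof rho)) /\
  (forall i, i < length (cr_conds rho) ->
     incl (vars (fst (nth i (cr_conds rho) (Var 0, Var 0))))
          (vars (cr_lhs rho) ++ flat_map vars (firstn i (bsof rho)))).
Proof. exact (@rule_info _ arity rules Hs f rho Hin). Qed.

Lemma X_lhs sg : X (subst sg (cr_lhs rho)) = App (HF f) (Lsg sg ls ++ repeat top (m rules f)).
Proof. rewrite Hlhs. simpl. f_equal. unfold Lsg. rewrite map_map. auto. Qed.

Lemma lin_j g j : linear (App g (map X ls ++ repl (map Var xs) (S p0) (firstn j (map (fun c => X (snd c)) cs)))).
Proof.
  destruct info as [ls' [_ [_ [_ [_ [_ [_ [Hnd _]]]]]]]].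
  pose proof Hp0.
  apply lin_pat with (C := flat_map vars (firstn j (bsof rho))).
  - rewrite Hlhs, vars_App in Hnd. rewrite <- (vars_App f). rewrite <- Hlhs.
    apply nodup_prefix_bs. rewrite Hlhs, vars_App. auto.
  - intros x Hx. apply V_lt. apply (incl_prefix_bs _ _ j). rewrite Hlhs, vars_App. auto.
  - rewrite firstn_map. unfold bsof. rewrite firstn_map, !flat_map_concat_map, !map_map.
    f_equal. apply map_ext. intros; apply vars_xi.
  - lia.
Qed.

Lemma lin_top g : linear (App g (map X ls ++ repl (map Var xs) (S p0) [top])).
Proof.
  pose proof (lin_j g 0) as Hl. unfold linear in *. rewrite vars_App in *.
  rewrite !flat_map_app in *. unfold repl in *. rewrite !flat_map_app in *. simpl in *. auto.
Qed.

Lemma Hk_gt j : j < length (cr_conds rho) -> j < length cs.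
Proof. auto. Qed.

Lemma step2 sg : 0 < length cs ->
  cs_step (X (subst sg (cr_lhs rho)))
    (App (HAux f (S p0) 1) (Lsg sg ls ++ repl (repeat top (m rules f)) (S p0) [asg sg cs 0])).
Proof.
  intros Hk. pose proof Hp0. apply csctx_root.
  exists (App (HF f) (map X ls ++ repl (map Var xs) (S p0) [top])).
  exists (App (HAux f (S p0) 1) (map X ls ++ repl (map Var xs) (S p0) [X (fst (cnth cs 1))])).
  exists (tau sg). split; [split|split].
  - apply lin_top.
  - exists f, (S p0), rho, ls, xs. split; [lia|]. split; [simpl; rewrite Nat.sub_0_r; auto|].
    split; auto. split; [unfold xs; apply length_seq|]. cbv zeta. right; left. auto.
  - rewrite X_lhs. simpl. rewrite map_app, tau_L, map_repl, tau_xs. simpl.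
    rewrite repl_repeat; auto. lia.
  - simpl. rewrite map_app, tau_L, map_repl, tau_xs. simpl. unfold cnth. simpl.
    rewrite tau_a; auto.
Qed.



Lemma step4 sg j : 1 <= j < length cs ->
  cs_step (App (HAux f (S p0) j) (Lsg sg ls ++ repl (repeat top (m rules f)) (S p0) (Bsg sg (firstn j cs))))
    (App (HAux f (S p0) (S j)) (Lsg sg ls ++ repl (repeat top (m rules f)) (S p0) (Bsg sg (firstn j cs) ++ [asg sg cs j]))).
Proof.
  intros Hk. pose proof Hp0. apply csctx_root.
  exists (App (HAux f (S p0) j) (map X ls ++ repl (map Var xs) (S p0) (firstn j (map (fun c => X (snd c)) cs)))).
  exists (App (HAux f (S p0) (S j)) (map X ls ++ repl (map Var xs) (S p0)
            (firstn j (map (fun c => X (snd c)) cs) ++ [X (fst (cnth cs (S j)))]))).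
  exists (tau sg). split; [split|split].
  - apply lin_j.
  - exists f, (S p0), rho, ls, xs. split; [lia|]. split; [simpl; rewrite Nat.sub_0_r; auto|].
    split; auto. split; [unfold xs; apply length_seq|]. cbv zeta. right; right; right; left.
    exists j. auto.
  - simpl. rewrite map_app, tau_L, map_repl, tau_xs, tau_B. auto.
  - simpl. rewrite map_app, tau_L, map_repl, tau_xs, map_app, tau_B. simpl. unfold cnth.
    simpl. rewrite Nat.sub_0_r, tau_a; auto. lia.
Qed.

Lemma step3 sg : 0 < length cs ->
  cs_step (App (HAux f (S p0) (length cs)) (Lsg sg ls ++ repl (repeat top (m rules f)) (S p0) (Bsg sg cs)))
    (X (subst sg (cr_rhs rho))).
Proof.
  intros Hk. pose proof Hp0. apply csctx_root.
  exists (App (HAux f (S p0) (length cs)) (map X ls ++ repl (map Var xs) (S p0) (firstn (length cs) (map (fun c => X (snd c)) cs)))).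
  exists (X (cr_rhs rho)).
  exists (tau sg). split; [split|split].
  - apply lin_j.
  - exists f, (S p0), rho, ls, xs. split; [lia|]. split; [simpl; rewrite Nat.sub_0_r; auto|].
    split; auto. split; [unfold xs; apply length_seq|]. cbv zeta. right; right; left.
    rewrite firstn_all2; [|rewrite length_map; auto]. auto.
  - simpl. rewrite map_app, tau_L, map_repl, tau_xs, tau_B, firstn_all. auto.
  - symmetry. apply tau_X. destruct info as [ls0 [_ [_ [_ [_ [_ [_ [_ [Hr _]]]]]]]]]. exact Hr.
Qed.

Lemma step1 sg : length cs = 0 ->
  cs_step (X (subst sg (cr_lhs rho))) (X (subst sg (cr_rhs rho))).
Proof.
  intros Hk. pose proof Hp0. apply csctx_root.
  exists (App (HF f) (map X ls ++ repl (map Var xs) (S p0) [top])).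
  exists (X (cr_rhs rho)).
  exists (tau sg). split; [split|split].
  - apply lin_top.
  - exists f, (S p0), rho, ls, xs. split; [lia|]. split; [simpl; rewrite Nat.sub_0_r; auto|].
    split; auto. split; [unfold xs; apply length_seq|]. cbv zeta. left. auto.
  - rewrite X_lhs. simpl. rewrite map_app, tau_L, map_repl, tau_xs. simpl.
    rewrite repl_repeat; auto. lia.
  - symmetry. apply tau_X. destruct info as [ls0 [_ [_ [_ [_ [_ [_ [_ [Hr _]]]]]]]]]. exact Hr.
Qed.

End R2.

Section R3.
Context {F : Type} (arity : F -> nat) (rules : F -> list (crule F)).
Hypothesis Hs : strong_cctrs arity rules.
Local Notation H := (term (@Hsym F)).
Local Notation X := (xi rules top).
Local Notation wf := (wf arity).
Local Notation cs_step := (cs_step arity rules).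

Lemma ctx_rt g pre post w w' : mu arity g (S (length pre)) = true ->
  clos_refl_trans _ cs_step w w' ->
  clos_refl_trans _ cs_step (App g (pre ++ w :: post)) (App g (pre ++ w' :: post)).
Proof.
  intros Hm Hr. induction Hr.
  - apply rt_step. apply csctx_arg; auto.
  - apply rt_refl.
  - eapply rt_trans; eauto.
Qed.

Variables (f : F) (p0 : nat) (rho : crule F) (ls : list (term F)).
Hypothesis Hnth : nth_error (rules f) p0 = Some rho.
Hypothesis Hlhs : cr_lhs rho = App f ls.
Variable Rc : term F -> term F -> Prop.
Hypothesis HRc : forall a b, Rc a b -> wf a -> wf b /\ clos_refl_trans _ cs_step (X a) (X b).
Variable sg : nat -> term F.
Hypothesis Hwl : wf (subst sg (cr_lhs rho)).

Local Notation cs := (cr_conds rho).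
Local Notation d := (@Var F 0, @Var F 0).
Definition conds j := Rc (subst sg (fst (nth j cs d))) (subst sg (snd (nth j cs d))).

Let inf := info Hs f p0 Hnth.

Lemma chain_wf j : j <= length cs -> (forall q, q < j -> conds q) ->
  forall x, In x (vars (cr_lhs rho) ++ flat_map vars (firstn j (bsof rho))) -> wf (sg x).
Proof.
  destruct inf as [ls' [_ [_ [_ [_ [Hwc [_ [_ [_ Ha]]]]]]]]].
  induction j; intros Hj Hc x Hx.
  - simpl in Hx. rewrite app_nil_r in Hx. eapply term_all_subst_var; eauto.
  - unfold bsof in *. rewrite (firstn_S_last _ (Var 0)) in Hx by (rewrite length_map; auto).
    rewrite flat_map_app, app_assoc in Hx. apply in_app_or in Hx. destruct Hx as [Hx|Hx].
    + apply IHj; auto. lia.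
    + simpl in Hx. rewrite app_nil_r in Hx.
      rewrite (nth_indep _ _ (snd d)) in Hx by (rewrite length_map; lia).
      rewrite map_nth in Hx.
      assert (Hwa : wf (subst sg (fst (nth j cs d)))).
      { apply term_all_subst.
        - rewrite Forall_forall in Hwc. apply (Hwc (nth j cs d)). apply nth_In. lia.
        - intros y Hy. apply IHj; auto. lia. apply Ha; auto. }
      destruct (HRc (Hc j (Nat.lt_succ_diag_r j)) Hwa) as [Hwb _].
      eapply term_all_subst_var; eauto.
Qed.

Lemma len_ls : length ls = arity f.
Proof.
  rewrite Hlhs in Hwl. simpl in Hwl. unfold wf in Hwl. apply term_all_App in Hwl.
  rewrite length_map in Hwl. apply Hwl.
Qed.

Definition AuxS j := App (HAux f (S p0) (S j))
  (Lsg rules sg ls ++ repl (repeat top (m rules f)) (S p0) (Bsg rules sg (firstn j cs) ++ [asg rules sg cs j])).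

Lemma AuxS_split j w : j <= length cs ->
  App (HAux f (S p0) (S j))
  (Lsg rules sg ls ++ repl (repeat top (m rules f)) (S p0) (Bsg rules sg (firstn j cs) ++ [w])) =
  App (HAux f (S p0) (S j)) ((Lsg rules sg ls ++ firstn p0 (repeat top (m rules f)) ++ Bsg rules sg (firstn j cs))
     ++ w :: skipn (S p0) (repeat top (m rules f))) /\
  mu arity (HAux f (S p0) (S j))
    (S (length (Lsg rules sg ls ++ firstn p0 (repeat top (m rules f)) ++ Bsg rules sg (firstn j cs)))) = true.
Proof.
  intros Hj. pose proof (Hp0 rules f p0 Hnth). split.
  - unfold repl. simpl. rewrite Nat.sub_0_r, <- !app_assoc. reflexivity.
  - unfold mu. apply Nat.eqb_eq. unfold Lsg, Bsg. rewrite !length_app, !length_map, length_firstn,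
    repeat_length, length_firstn, len_ls. fold cs. lia.
Qed.

Lemma chain_aux j : j < length cs -> (forall q, q < j -> conds q) ->
  clos_trans _ cs_step (X (subst sg (cr_lhs rho))) (AuxS j).
Proof.
  induction j; intros Hj Hc.
  - apply t_step. apply step2; auto.
  - assert (IH : clos_trans _ cs_step (X (subst sg (cr_lhs rho))) (AuxS j)) by (apply IHj; [lia|intros q Hq; apply Hc; lia]).
    assert (Hwa : wf (subst sg (fst (nth j cs d)))).
    { destruct inf as [ls' [_ [_ [_ [_ [Hwc [_ [_ [_ Ha]]]]]]]]].
      apply term_all_subst.
      - rewrite Forall_forall in Hwc. apply (Hwc (nth j cs d)). apply nth_In. lia.
      - intros y Hy. apply (chain_wf (j:=j)); [lia| intros q Hq; apply Hc; lia | apply Ha; auto; lia]. }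
    destruct (HRc (Hc j (Nat.lt_succ_diag_r j)) Hwa) as [_ Hr].
    eapply t_trans. exact IH.
    apply clos_rt_t with (y := App (HAux f (S p0) (S j))
      (Lsg rules sg ls ++ repl (repeat top (m rules f)) (S p0) (Bsg rules sg (firstn (S j) cs)))).
    + unfold AuxS. destruct (AuxS_split (j:=j) (asg rules sg cs j)) as [E1 Hm]; [lia|].
      rewrite E1. rewrite (firstn_S_last _ d) by lia. unfold Bsg at 2. rewrite map_app.
      destruct (AuxS_split (j:=j) (X (subst sg (snd (nth j cs d))))) as [E2 _]; [lia|].
      unfold Bsg in E2. simpl map. rewrite E2. apply ctx_rt; auto.
    + apply t_step. apply step4; auto. lia.
Qed.

Lemma chain_full : (forall q, q < length cs -> conds q) ->
  clos_trans _ cs_step (X (subst sg (cr_lhs rho))) (X (subst sg (cr_rhs rho))).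
Proof.
  intros Hc. destruct (zerop (length cs)) as [Hk|Hk0].
  2: assert (Ek : length cs = S (length cs - 1)) by lia; set (n := length cs - 1) in *; clearbody n.
  - apply t_step. eapply step1; eauto.
  - assert (IH : clos_trans _ cs_step (X (subst sg (cr_lhs rho))) (AuxS n)) by (apply chain_aux; [lia|intros q Hq; apply Hc; lia]).
    assert (Hwa : wf (subst sg (fst (nth n cs d)))).
    { destruct inf as [ls' [_ [_ [_ [_ [Hwc [_ [_ [_ Ha]]]]]]]]].
      apply term_all_subst.
      - rewrite Forall_forall in Hwc. apply (Hwc (nth n cs d)). apply nth_In. lia.
      - intros y Hy. apply (chain_wf (j:=n)); [lia| intros q Hq; apply Hc; lia | apply Ha; auto; lia]. }
    destruct (HRc (Hc n (ltac:(lia))) Hwa) as [_ Hr].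
    eapply t_trans. exact IH.
    apply clos_rt_t with (y := App (HAux f (S p0) (length cs))
      (Lsg rules sg ls ++ repl (repeat top (m rules f)) (S p0) (Bsg rules sg cs))).
    + unfold AuxS. destruct (AuxS_split (j:=n) (asg rules sg cs n)) as [E1 Hm]; [lia|].
      rewrite E1. rewrite Ek.
      replace cs with (firstn (S n) cs) at 3 by (rewrite firstn_all2; auto; lia).
      rewrite (firstn_S_last _ d) by lia. unfold Bsg at 2. rewrite map_app.
      destruct (AuxS_split (j:=n) (X (subst sg (snd (nth n cs d))))) as [E2 _]; [lia|].
      unfold Bsg in E2. simpl map. rewrite E2. apply ctx_rt; auto.
    + apply t_step. replace (S n) with (length cs). apply step3; auto.
Qed.

Lemma chain_sq j : j < length cs -> (forall q, q < j -> conds q) ->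
  exists T, clos_trans _ cs_step (X (subst sg (cr_lhs rho))) T /\
    actx arity (X (subst sg (fst (nth j cs d)))) T.
Proof.
  intros Hj Hc. exists (AuxS j). split. apply chain_aux; auto.
  unfold AuxS. destruct (AuxS_split (j:=j) (asg rules sg cs j)) as [E1 Hm]; [lia|].
  rewrite E1. apply ax_arg; auto. constructor.
Qed.

End R3.

Section D1.
Context {F : Type} (arity : F -> nat) (rules : F -> list (crule F)).
Hypothesis Hs : strong_cctrs arity rules.
Local Notation H := (term (@Hsym F)).
Local Notation X := (xi rules top).
Local Notation wf := (wf arity).
Local Notation cs_step := (cs_step arity rules).

Lemma ctx_ct g pre post w w' : mu arity g (S (length pre)) = true ->
  clos_trans _ cs_step w w' ->
  clos_trans _ cs_step (App g (pre ++ w :: post)) (App g (pre ++ w' :: post)).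
Proof.
  intros Hm Hr. induction Hr.
  - apply t_step. apply csctx_arg; auto.
  - eapply t_trans; eauto.
Qed.

Lemma ct_rt {A} (R : A -> A -> Prop) a b : clos_trans _ R a b -> clos_refl_trans _ R a b.
Proof. induction 1; eauto using rt_step, rt_trans. Qed.

Lemma wf_arg f ss1 s ss2 : wf (App f (ss1 ++ s :: ss2)) -> wf s.
Proof.
  unfold wf. intros Hw. apply term_all_App in Hw. destruct Hw as [_ Hw].
  rewrite Forall_forall in Hw. apply Hw. apply in_or_app; simpl; auto.
Qed.

Lemma wf_arg_repl f ss1 s t ss2 : wf (App f (ss1 ++ s :: ss2)) -> wf t ->
  wf (App f (ss1 ++ t :: ss2)).
Proof.
  unfold wf. intros Hw Ht. apply term_all_App in Hw. destruct Hw as [Hl Hw].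
  apply term_all_App. rewrite length_app in *. simpl in *. split; auto.
  rewrite Forall_app in *. destruct Hw as [H1 H2]. inversion H2; subst. split; auto.
Qed.

Lemma root_sim (Rc : term F -> term F -> Prop) u v :
  (forall a b, Rc a b -> wf a -> wf b /\ clos_refl_trans _ cs_step (X a) (X b)) ->
  root_rel rules Rc u v -> wf u -> wf v /\ clos_trans _ cs_step (X u) (X v).
Proof.
  intros HRc [rho [sg [[f Hin] [-> [-> Hc]]]]] Hwu.
  destruct (In_nth_error _ _ Hin) as [p0 Hnth].
  destruct (info Hs f p0 Hnth) as [ls [Hlhs [_ [_ [Hwr [_ [_ [_ [Hir _]]]]]]]]].
  assert (Hcq : forall q, q < length (cr_conds rho) -> conds rho Rc sg q).
  { intros q Hq. unfold conds. rewrite Forall_forall in Hc. apply Hc. apply nth_In; auto. }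
  split.
  - apply term_all_subst; auto. intros x Hx.
    apply (chain_wf Hs f p0 Hnth _ HRc _ Hwu (j := length (cr_conds rho))); auto.
    unfold bsof. rewrite firstn_all2; [|rewrite length_map; auto]. apply Hir; auto.
  - eapply chain_full; eauto.
Qed.

Lemma sim_approx n : forall u v, approx rules n u v -> wf u -> wf v /\ clos_trans _ cs_step (X u) (X v).
Proof.
  induction n; intros u v Ha Hw; [destruct Ha|].
  change (ctx (root_rel rules (clos_refl_trans _ (approx rules n))) u v) in Ha.
  induction Ha as [u v Hr|f ss1 s t ss2 Hc IHc].
  - eapply root_sim; eauto. intros a b Hab. induction Hab as [a b Hab| |]; intros Hwa.
    + destruct (IHn _ _ Hab Hwa). split; auto. apply ct_rt; auto.
    + split; auto. apply rt_refl.
    + destruct (IHHab1 Hwa) as [Hy Hxy]. destruct (IHHab2 Hy) as [Hz Hyz].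
      split; auto. eapply rt_trans; eauto.
  - destruct (IHc (wf_arg _ _ _ Hw)) as [Hwt Hct]. split. eapply wf_arg_repl; eauto.
    simpl. rewrite !map_app. simpl. rewrite <- !app_assoc. simpl.
    apply ctx_ct; auto. unfold mu. unfold wf in Hw. apply term_all_App in Hw.
    rewrite length_app in Hw. simpl in Hw. rewrite length_map.
    apply andb_true_intro; split; apply Nat.leb_le; lia.
Qed.

Lemma step_sim u v : step rules u v -> wf u -> wf v /\ clos_trans _ cs_step (X u) (X v).
Proof. intros [n Hn]. eapply sim_approx; eauto. Qed.

Lemma rt_step_sim a b : clos_refl_trans _ (step rules) a b -> wf a ->
  wf b /\ clos_refl_trans _ cs_step (X a) (X b).
Proof.
  induction 1 as [a b Hab| |]; intros Hwa.
  + destruct (step_sim Hab Hwa). split; auto. apply ct_rt; auto.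
  + split; auto. apply rt_refl.
  + destruct (IHclos_refl_trans1 Hwa) as [Hy Hxy]. destruct (IHclos_refl_trans2 Hy) as [Hz Hyz].
    split; auto. eapply rt_trans; eauto.
Qed.

Lemma sqsup_sim u v : sqsup rules u v -> wf u ->
  wf v /\ exists T, clos_trans _ cs_step (X u) T /\ actx arity (X v) T.
Proof.
  intros [w [rho [sg [i [Hsub [[f Hin] [-> [Hi [Hc ->]]]]]]]]] Hwu.
  destruct (In_nth_error _ _ Hin) as [p0 Hnth].
  destruct (info Hs f p0 Hnth) as [ls [Hlhs [_ [_ [Hwr [Hwc [_ [_ [Hir Ha]]]]]]]]].
  assert (Hww : wf (subst sg (cr_lhs rho))) by (eapply term_all_subterm; eauto).
  assert (HRc : forall a b, clos_refl_trans _ (step rules) a b -> wf a -> wf b /\ clos_refl_trans _ cs_step (X a) (X b))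
    by (intros; apply rt_step_sim; auto).
  assert (Hcq : forall q, q < i -> conds rho (clos_refl_trans _ (step rules)) sg q).
  { intros q Hq. unfold conds. apply Hc; auto. }
  split.
  - apply term_all_subst.
    + rewrite Forall_forall in Hwc. apply (Hwc (nth i (cr_conds rho) (Var 0, Var 0))). apply nth_In; auto.
    + intros x Hx. apply (chain_wf Hs f p0 Hnth _ HRc _ Hww (j := i)); [lia|exact Hcq|apply Ha; auto].
  - destruct (chain_sq Hs p0 Hnth Hlhs _ HRc _ Hww Hi Hcq) as [T0 [H1 H2]].
    destruct (actx_ct (wf_xi_actx arity rules Hwu Hsub) H1) as [T [H3 H4]].
    exists T. split; auto. eapply actx_trans; eauto.
Qed.

Fixpoint lab (t : term F) : term (@Gsym F) :=
  match t with
  | Var x => Var x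
  | App f ts => App (match rules f with [] => GC f | _ => GD f (repeat true (m rules f)) end) (map lab ts)
  end.

Lemma zeta_lab t : zeta (lab t) = X t.
Proof.
  induction t using term_ind2; simpl; auto.
  unfold m. destruct (rules f) eqn:E; simpl.
  - rewrite app_nil_r, map_map. f_equal. apply map_ext_in; auto.
  - rewrite map_map. f_equal. f_equal. apply map_ext_in; auto.
    rewrite map_repeat_const. auto.
Qed.

Lemma wfG_lab t : wf t -> wfG arity rules (lab t).
Proof.
  induction t using term_ind2; intros Hw; simpl; auto.
  unfold wf in Hw. apply term_all_App in Hw. destruct Hw as [Hl Hw].
  unfold wfG. apply term_all_App. rewrite length_map. split.
  - unfold is_constructor, m. destruct (rules f) eqn:E; simpl; auto.
    rewrite E. split; [discriminate|]. split; auto. rewrite repeat_length. auto.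
  - rewrite Forall_forall in *. intros u Hu. apply in_map_iff in Hu. destruct Hu as [t [<- Ht]].
    apply H; auto. apply Hw; auto.
Qed.

Lemma Acc_flip_ct {A} (R : A -> A -> Prop) x :
  Acc (fun a b => R b a) x -> Acc (fun a b => clos_trans _ R b a) x.
Proof.
  intros Ha. apply Acc_clos_trans in Ha. revert Ha. apply Acc_incl.
  intros a b Hab. induction Hab. - apply t_step; auto. - eapply t_trans; eauto.
Qed.

Lemma no_chain T : Acc (fun a b => clos_trans _ cs_step b a) T ->
  forall u : nat -> term F, (forall k, step rules (u k) (u (S k)) \/ sqsup rules (u k) (u (S k))) ->
  wf (u 0) -> actx arity (X (u 0)) T -> False.
Proof.
  induction 1 as [T _ IH]. intros u Hu Hw Ha.
  destruct (Hu 0) as [Hst|Hsq].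
  - destruct (step_sim Hst Hw) as [Hw1 Hc].
    destruct (actx_ct Ha Hc) as [T' [H1 H2]].
    apply (IH T' H2 (fun k => u (S k))); auto.
  - destruct (sqsup_sim Hsq Hw) as [Hw1 [T0 [Hc Ha0]]].
    destruct (actx_ct Ha Hc) as [T' [H1 H2]].
    apply (IH T' H2 (fun k => u (S k))); auto. simpl. eapply actx_trans; eauto.
Qed.

Theorem dir1 : cs_terminating_on arity rules (fun t => exists s, wfG arity rules s /\ t = zeta s) ->
  quasi_decreasing arity rules.
Proof.
  intros Hcs s Hws [u [Hu0 Hu]].
  assert (HA : Acc (fun a b => cs_step b a) (X s)).
  { apply not_chain_Acc. apply Hcs. exists (lab s). split. apply wfG_lab; auto.
    symmetry; apply zeta_lab. }
  apply Acc_flip_ct in HA.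
  apply (no_chain HA u Hu); subst; auto. constructor.
Qed.

End D1.

Section E.
Context {F : Type} (arity : F -> nat) (rules : F -> list (crule F)).
Local Notation H := (term (@Hsym F)).
Local Notation X := (xi rules top).
Local Notation wf := (wf arity).
Local Notation cs_step := (cs_step arity rules).
Local Notation d := (@Var F 0, @Var F 0).

Fixpoint er (t : H) : term F :=
  match t with
  | Var x => Var x
  | App g ts =>
      match g with
      | HF f => App f (firstn (arity f) (map er ts))
      | HAux f _ _ => App f (firstn (arity f) (map er ts))
      | _ => Var 0
      end
  end.

Lemma firstn_app_exact {A} (l1 l2 : list A) n : length l1 = n -> firstn n (l1 ++ l2) = l1.
Proof. intros <-. rewrite firstn_app, firstn_all, Nat.sub_diag. simpl. apply app_nil_r. Qed.

Lemma er_HF f Lh rest : length Lh = arity f -> er (App (HF f) (Lh ++ rest)) = App f (map er Lh).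
Proof. intros Hl. simpl. rewrite map_app, firstn_app_exact; auto. rewrite length_map; auto. Qed.

Lemma er_Aux f i j Lh rest : length Lh = arity f -> er (App (HAux f i j) (Lh ++ rest)) = App f (map er Lh).
Proof. intros Hl. simpl. rewrite map_app, firstn_app_exact; auto. rewrite length_map; auto. Qed.

Lemma erXs (tau : nat -> H) r : wf r -> er (subst tau (X r)) = subst (fun x => er (tau x)) r.
Proof.
  induction r using term_ind2; intros Hw; simpl; auto.
  unfold wf in Hw. apply term_all_App in Hw. destruct Hw as [Hl Hw].
  rewrite map_app, map_map, map_app, firstn_app_exact.
  2: rewrite !length_map; auto.
  f_equal. rewrite map_map. apply map_ext_in. intros a Ha. apply H; auto.
  rewrite Forall_forall in Hw; apply Hw; auto.
Qed.

Lemma erL (tau : nat -> H) ls : Forall wf ls ->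
  map er (map (subst tau) (map X ls)) = map (subst (fun x => er (tau x))) ls.
Proof.
  intros Hw. rewrite !map_map. apply map_ext_in. intros a Ha. apply erXs.
  rewrite Forall_forall in Hw; auto.
Qed.

Definition Kof (f : F) (i : nat) : nat :=
  match nth_error (rules f) (i - 1) with Some rho => length (cr_conds rho) | None => 0 end.

Definition AuxOK (f : F) (i j : nat) (args : list H) : Prop :=
  exists rho ls th Lh Xl cs',
    nth_error (rules f) (i - 1) = Some rho /\ 1 <= i /\ cr_lhs rho = App f ls /\
    1 <= j <= length (cr_conds rho) /\
    args = Lh ++ repl Xl i cs' /\ length Lh = arity f /\ length Xl = m rules f /\
    length cs' = j /\
    map er Lh = map (subst th) ls /\
    (forall p, p < j - 1 -> er (nth p cs' (Var 0)) = subst th (snd (nth p (cr_conds rho) d))) /\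
    (forall p, p < j -> clos_refl_trans _ (step rules)
        (subst th (fst (nth p (cr_conds rho) d))) (er (nth p cs' (Var 0)))).

Definition AuxShape (u : H) : Prop :=
  match u with App (HAux f i j) args => AuxOK f i j args | _ => True end.

Definition Inv (t : H) : Prop := forall u, subterm_eq u t -> AuxShape u.

Lemma Inv_sub t u : Inv t -> subterm_eq u t -> Inv u.
Proof. intros Ht Hu v Hv. apply Ht. eapply subterm_trans; eauto. Qed.

Lemma Inv_App g args : Inv (App g args) <-> AuxShape (App g args) /\ forall a, In a args -> Inv a.
Proof.
  split.
  - intros Hi. split. apply Hi. constructor. intros a Ha. eapply Inv_sub; eauto.
    econstructor; eauto. constructor.
  - intros [H1 H2] u Hu. inversion Hu; subst; auto. apply (H2 t); auto.
Qed.

Definition noaux (p : H) : Prop :=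
  term_all (fun g _ => match g with HAux _ _ _ => False | _ => True end) p.

Lemma Inv_subst_pat (tau : nat -> H) p :
  noaux p -> (forall x, In x (vars p) -> Inv (tau x)) -> Inv (subst tau p).
Proof.
  induction p using term_ind2; intros Hn Hx.
  - apply Hx. simpl; auto.
  - unfold noaux in Hn. apply term_all_App in Hn. destruct Hn as [Hg Hn].
    simpl. apply Inv_App. split.
    + destruct f; simpl; auto. destruct Hg.
    + intros a Ha. apply in_map_iff in Ha. destruct Ha as [q [<- Hq]]. apply H; auto.
      rewrite Forall_forall in Hn; apply Hn; auto.
      intros x Hxq. apply Hx. rewrite vars_App, in_flat_map. eauto.
Qed.

Lemma noaux_Inv p : noaux p -> Inv p.
Proof.
  intros Hn. rewrite <- (subst_var p). apply Inv_subst_pat; auto.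
  intros x _ u Hu. inversion Hu; simpl; auto.
Qed.

Lemma noaux_X r : noaux (X r).
Proof.
  induction r using term_ind2; [unfold noaux; simpl; auto|]. simpl. unfold noaux. apply term_all_App. split; auto.
  apply Forall_app. split.
  - rewrite Forall_forall. intros a Ha. apply in_map_iff in Ha. destruct Ha as [q [<- Hq]]. apply H; auto.
  - rewrite Forall_forall. intros a Ha. apply repeat_spec in Ha. subst. unfold top. simpl. auto.
Qed.

Lemma noaux_app_pat g (ps : list H) : (match g with HAux _ _ _ => False | _ => True end) ->
  Forall noaux ps -> noaux (App g ps).
Proof. intros Hg Hp. unfold noaux. apply term_all_App. split; auto. Qed.

Lemma Inv_from_lhs (tau : nat -> H) l p :
  Inv (subst tau l) -> noaux p -> incl (vars p) (vars l) -> Inv (subst tau p).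
Proof.
  intros Hl Hn Hinc. apply Inv_subst_pat; auto. intros x Hx.
  eapply Inv_sub; eauto. apply subterm_var. apply Hinc; auto.
Qed.

Definition is_top (t : H) : bool := match t with App HTop [] => true | _ => false end.
Fixpoint count_top (l : list H) : nat :=
  match l with [] => 0 | x :: l => (if is_top x then 1 else 0) + count_top l end.
Lemma count_top_app l1 l2 : count_top (l1 ++ l2) = count_top l1 + count_top l2.
Proof. induction l1; simpl; auto. rewrite IHl1. lia. Qed.

Definition meas (t : H) : nat * nat :=
  match t with
  | App (HF f) args => (count_top (skipn (arity f) args), 0)
  | App (HAux f i j) args =>
      (count_top (firstn (i-1) (skipn (arity f) args)) + count_top (skipn (i-1+j) (skipn (arity f) args)),
       Kof f i - j + 1)
  | _ => (0, 0)
  end.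

Definition lex (a b : nat * nat) : Prop := fst a < fst b \/ (fst a = fst b /\ snd a < snd b).

Lemma lex_wf : well_founded lex.
Proof.
  intros [a b]. revert b. induction a as [a IHa] using lt_wf_ind. intros b.
  induction b as [b IHb] using lt_wf_ind. constructor. intros [a' b'] [H1|[H1 H2]]; simpl in *.
  - apply IHa; auto.
  - subst. apply IHb; auto.
Qed.

Lemma skipn_repl {A} (Lh Xl cs' : list A) n i : length Lh = n -> 1 <= i <= length Xl ->
  skipn n (Lh ++ repl Xl i cs') = firstn (i-1) Xl ++ cs' ++ skipn i Xl.
Proof. intros <- Hi. rewrite skipn_app, skipn_all, Nat.sub_diag. simpl. reflexivity. Qed.

Lemma meas_Aux f i j Lh Xl cs' : length Lh = arity f -> 1 <= i <= length Xl -> length cs' = j ->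
  meas (App (HAux f i j) (Lh ++ repl Xl i cs')) =
  (count_top (firstn (i-1) Xl) + count_top (skipn i Xl), Kof f i - j + 1).
Proof.
  intros Hl Hi Hj. unfold meas. rewrite (skipn_repl _ _ _ Hl Hi).
  rewrite firstn_app_exact by (rewrite length_firstn; lia).
  rewrite skipn_app, length_firstn, skipn_all2 by (rewrite length_firstn; lia).
  simpl. rewrite skipn_app, Hj. replace (i - 1 + j - (Nat.min (i-1) (length Xl)) - j) with 0 by lia.
  rewrite skipn_all2 by lia. simpl. reflexivity.
Qed.

Lemma meas_HF f Lh Xl cs' i : length Lh = arity f -> 1 <= i <= length Xl ->
  meas (App (HF f) (Lh ++ repl Xl i cs')) =
  (count_top (firstn (i-1) Xl) + count_top cs' + count_top (skipn i Xl), 0).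
Proof.
  intros Hl Hi. unfold meas. rewrite (skipn_repl _ _ _ Hl Hi). rewrite !count_top_app. f_equal. lia.
Qed.

End E.

Section D2.
Context {F : Type} (arity : F -> nat) (rules : F -> list (crule F)).
Hypothesis Hs : strong_cctrs arity rules.
Local Notation H := (term (@Hsym F)).
Local Notation X := (xi rules top).
Local Notation wf := (wf arity).
Local Notation cs_step := (cs_step arity rules).
Local Notation d := (@Var F 0, @Var F 0).
Local Notation er := (er arity).
Local Notation Inv := (Inv arity rules).
Local Notation AuxOK := (AuxOK arity rules).
Local Notation meas := (meas arity rules).

Ltac in_app_split H := repeat (apply in_app_or in H; destruct H as [H|H]).
Ltac in_app_find := solve [repeat (first [assumption | apply in_or_app; left; assumption | apply in_or_app; right])].

Lemma sub_pat (tau : nat -> H) g A B i us :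
  subst tau (App g (A ++ repl B i us)) = App g (map (subst tau) A ++ repl (map (subst tau) B) i (map (subst tau) us)).
Proof. simpl. rewrite map_app, map_repl. auto. Qed.

Lemma vars_pat g (A B us : list H) i :
  vars (App g (A ++ repl B i us)) =
  flat_map vars A ++ flat_map vars (firstn (i-1) B) ++ flat_map vars us ++ flat_map vars (skipn i B).
Proof. rewrite vars_App. unfold repl. rewrite !flat_map_app. auto. Qed.

Lemma noaux_vars (xs : list nat) : Forall noaux (map (@Var (@Hsym F)) xs).
Proof. rewrite Forall_forall; intros a Ha; apply in_map_iff in Ha; destruct Ha as [x [<- _]]; unfold noaux; simpl; auto. Qed.

Lemma noaux_bots n : Forall noaux (repeat (@bot F) n).
Proof. rewrite Forall_forall; intros a Ha; apply repeat_spec in Ha; subst; unfold noaux; simpl; auto. Qed.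

Lemma AP_noaux t v : AP arity rules t v -> noaux v.
Proof.
  induction 1; apply noaux_app_pat; simpl; auto.
  - apply noaux_vars.
  - apply Forall_app; split; [apply noaux_vars|apply noaux_bots].
  - apply Forall_app; split; [apply noaux_vars|constructor; auto; apply noaux_vars].
Qed.

Lemma nth_map_in {A B} (g : A -> B) l p da db : p < length l -> nth p (map g l) db = g (nth p l da).
Proof. intros Hp. rewrite (nth_indep _ _ (g da)) by (rewrite length_map; auto). apply map_nth. Qed.

Lemma Inv_args_pat (tau : nat -> H) l (g : F) (ps : list H) :
  Inv (subst tau l) -> Forall noaux ps -> incl (flat_map vars ps) (vars l) ->
  forall a, In a (map (subst tau) ps) -> Inv a.
Proof.
  intros Hl Hn Hinc. assert (Hi : Inv (subst tau (App (HF g) ps))).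
  { apply Inv_from_lhs with l; auto. apply noaux_app_pat; simpl; auto. }
  simpl in Hi. apply Inv_App in Hi. apply Hi.
Qed.

Lemma agree_lhs (th th' : nat -> term F) f ls :
  map (subst th') ls = map (subst th) ls -> forall x, In x (vars (App f ls)) -> th' x = th x.
Proof.
  intros E. apply subst_agree. simpl. f_equal. exact E.
Qed.

Lemma AuxOK_decomp f i j rho ls Lh Xl cs0 :
  nth_error (rules f) (i - 1) = Some rho -> cr_lhs rho = App f ls ->
  length Lh = arity f -> length Xl = m rules f -> 1 <= i <= m rules f -> length cs0 = j ->
  AuxOK f i j (Lh ++ repl Xl i cs0) ->
  exists th', map er Lh = map (subst th') ls /\
    (forall p, p < j - 1 -> er (nth p cs0 (Var 0)) = subst th' (snd (nth p (cr_conds rho) d))) /\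
    (forall p, p < j -> clos_refl_trans _ (step rules)
        (subst th' (fst (nth p (cr_conds rho) d))) (er (nth p cs0 (Var 0)))).
Proof.
  intros Hn Hl HLh HXl Hi Hj [rho' [ls' [th [Lh' [Xl' [cs' [Hn' [_ [Hl' [_ [E [HLh' [HXl' [Hj' [HL [Hfr Hc]]]]]]]]]]]]]]]].
  rewrite Hn in Hn'. injection Hn' as <-. rewrite Hl in Hl'. injection Hl' as <-.
  destruct (app_eq_len _ _ _ _ (eq_trans HLh (eq_sym HLh')) E) as [<- E2].
  unfold repl in E2.
  assert (El : length (firstn (i-1) Xl) = length (firstn (i-1) Xl')) by (rewrite !length_firstn; lia).
  destruct (app_eq_len _ _ _ _ El E2) as [_ E3].
  assert (El2 : length cs0 = length cs') by lia.
  destruct (app_eq_len _ _ _ _ El2 E3) as [E4 _]. subst cs'.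
  exists th. auto.
Qed.

Lemma agree_cond rho f ls (th th' : nat -> term F) p :
  In rho (rules f) -> cr_lhs rho = App f ls ->
  (forall x, In x (vars (cr_lhs rho)) -> th' x = th x) ->
  (forall q, q < p -> subst th' (snd (nth q (cr_conds rho) d)) = subst th (snd (nth q (cr_conds rho) d))) ->
  p < length (cr_conds rho) ->
  subst th' (fst (nth p (cr_conds rho) d)) = subst th (fst (nth p (cr_conds rho) d)).
Proof.
  intros Hin Hl Hx Hq Hp.
  destruct (rule_info Hs f rho Hin) as [ls0 [_ [_ [_ [_ [_ [_ [_ [_ Ha]]]]]]]]].
  apply subst_ext. intros x Hxa. apply Ha in Hxa; auto. apply in_app_or in Hxa. destruct Hxa as [Hxa|Hxa]; auto.
  apply in_flat_map in Hxa. destruct Hxa as [b [Hb Hxb]].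
  apply (In_nth _ _ (Var 0)) in Hb. destruct Hb as [q [Hq1 Hq2]].
  rewrite length_firstn in Hq1. rewrite nth_firstn in Hq2.
  replace (q <? p) with true in Hq2 by (symmetry; apply Nat.ltb_lt; lia).
  unfold bsof in Hq2. rewrite (@nth_map_in _ _ snd (cr_conds rho) q d (Var 0)) in Hq2 by (unfold bsof in Hq1; rewrite length_map in Hq1; lia).
  subst b. eapply subst_agree; [apply Hq|]; eauto. lia.
Qed.


Lemma Forall_repl {A} (P : A -> Prop) l i us : Forall P l -> Forall P us -> Forall P (repl l i us).
Proof.
  intros H1 H2. unfold repl. rewrite Forall_forall in *. intros x Hx.
  apply in_app_or in Hx. destruct Hx as [Hx|Hx]; [apply H1; eapply in_firstn'; eauto|].
  apply in_app_or in Hx. destruct Hx as [Hx|Hx]; [apply H2; auto|apply H1; eapply in_skipn'; eauto].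
Qed.

Lemma noaux_Xs (ls : list (term F)) : Forall noaux (map X ls).
Proof. rewrite Forall_forall. intros a Ha. apply in_map_iff in Ha. destruct Ha as [q [<- _]]. apply noaux_X. Qed.

Lemma flat_vars_X (ls : list (term F)) : flat_map vars (map X ls) = flat_map vars ls.
Proof. rewrite !flat_map_concat_map, map_map. f_equal. apply map_ext. intros; apply vars_xi. Qed.

Lemma flat_vars_B (cs : list (term F * term F)) j :
  flat_map vars (firstn j (map (fun c => X (snd c)) cs)) = flat_map vars (firstn j (map snd cs)).
Proof. rewrite !firstn_map, <- flat_vars_X, map_map. auto. Qed.

Lemma flat_vars_B' (cs : list (term F * term F)) :
  flat_map vars (map (fun c => X (snd c)) cs) = flat_map vars (map snd cs).
Proof. rewrite <- flat_vars_X, map_map. auto. Qed.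

Lemma count_top_map_sub (tau : nat -> H) : count_top [subst tau top] = 1.
Proof. reflexivity. Qed.

Lemma root_case t t2 : Inv t -> xi_root arity rules t t2 ->
  Inv t2 /\ (step rules (er t) (er t2) \/ (er t2 = er t /\ lex (meas t2) (meas t))).
Proof.
  intros HI [l [r [tau [[Hlin [f [i [rho [ls [xs [Hi [Hnth [Hlhs [Hxs Hcase]]]]]]]]]] [-> ->]]]]].
  cbv zeta in Hcase.
  assert (Hin : In rho (rules f)) by (eapply nth_error_In; eauto).
  destruct (rule_info Hs f rho Hin) as [ls0 [Hl0 [_ [Hwl [Hwr [Hwc [_ [_ [Hir Ha]]]]]]]]].
  rewrite Hlhs in Hl0. injection Hl0 as <-.
  assert (Hmi : i - 1 < m rules f) by (unfold m; apply nth_error_Some; rewrite Hnth; discriminate).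
  assert (Hlw : length ls = arity f /\ Forall wf ls).
  { rewrite Hlhs in Hwl. unfold wf in Hwl. apply term_all_App in Hwl. exact Hwl. }
  destruct Hlw as [Hlen Hwls].
  set (th := fun x => er (tau x)).
  assert (HLer : map er (map (subst tau) (map X ls)) = map (subst th) ls) by (apply erL; auto).
  assert (HLlen : length (map (subst tau) (map X ls)) = arity f) by (rewrite !length_map; auto).
  assert (HXlen : length (map (subst tau) (map (@Var (@Hsym F)) xs)) = m rules f) by (rewrite !length_map; auto).
  assert (Hlhs' : App f (map (subst th) ls) = subst th (cr_lhs rho)) by (rewrite Hlhs; reflexivity).
  assert (Him : 1 <= i <= m rules f) by lia.
  assert (HK : Kof rules f i = length (cr_conds rho)) by (unfold Kof; rewrite Hnth; auto).
  assert (Hwcs : forall p, p < length (cr_conds rho) -> wf (fst (nth p (cr_conds rho) d)) /\ wf (snd (nth p (cr_conds rho) d))).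
  { intros p Hp. rewrite Forall_forall in Hwc. apply Hwc. apply nth_In; auto. }
  destruct Hcase as [[Hk [-> ->]] | [[Hk [-> ->]] | [[Hk [-> ->]] | [[j [Hj [-> ->]]] |
    [[j [v [Hj [HAP [-> ->]]]]] | [ys [j [v [Hys [Hj [HAP [-> ->]]]]]]]]]]]].
  -
    assert (Hnil : cr_conds rho = []) by (destruct (cr_conds rho); simpl in Hk; auto; lia).
    split.
    + eapply Inv_from_lhs; eauto. apply noaux_X. rewrite vars_xi, vars_pat, flat_vars_X.
      intros x Hx. apply Hir in Hx. unfold bsof in Hx. rewrite Hnil in Hx. simpl in Hx.
      rewrite app_nil_r, Hlhs, vars_App in Hx. apply in_or_app; auto.
    + left. rewrite sub_pat, er_HF by auto. rewrite HLer, erXs by auto. rewrite Hlhs'.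
      apply step_root. exists f; auto. rewrite Hnil. constructor.
  -
    split.
    + rewrite sub_pat. apply Inv_App. split.
      * simpl. exists rho, ls, th, (map (subst tau) (map X ls)), (map (subst tau) (map Var xs)),
          [subst tau (X (fst (cnth (cr_conds rho) 1)))].
        repeat split; auto; try lia.
        -- intros p Hp. replace p with 0 by lia. simpl. unfold cnth. simpl.
           rewrite erXs. apply rt_refl. apply Hwcs. lia.
      * rewrite <- map_repl, <- map_app. eapply Inv_args_pat; eauto.
        -- apply Forall_app; split; [apply noaux_Xs|]. apply Forall_repl; [apply noaux_vars|].
           constructor; [apply noaux_X|constructor].
        -- rewrite <- vars_App with (f := HF f). rewrite !vars_pat, !flat_vars_X. simpl.
           rewrite app_nil_r, vars_xi. intros x Hx.
           in_app_split Hx; try in_app_find.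
           unfold cnth in Hx. simpl in Hx. apply Ha in Hx; [|lia]. simpl in Hx. rewrite app_nil_r, Hlhs, vars_App in Hx.
           apply in_or_app; auto.
    + right. rewrite !sub_pat, er_Aux, er_HF by auto. split; auto.
      rewrite meas_Aux, meas_HF; try lia; auto. unfold lex. simpl. lia.
  -
    split.
    + eapply Inv_from_lhs; eauto. apply noaux_X. rewrite vars_xi, vars_pat, flat_vars_X, flat_vars_B'.
      intros x Hx. apply Hir in Hx. rewrite Hlhs, vars_App in Hx. unfold bsof in Hx.
      in_app_split Hx; try in_app_find.
    + left.
      assert (HA : AuxOK f i (length (cr_conds rho)) (map (subst tau) (map X ls) ++
         repl (map (subst tau) (map Var xs)) i (map (subst tau) (map (fun c => X (snd c)) (cr_conds rho))))).
      { specialize (HI _ (st_refl _)). rewrite sub_pat in HI. exact HI. }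
      assert (Hlc : length (map (subst tau) (map (fun c => X (snd c)) (cr_conds rho))) = length (cr_conds rho))
        by (rewrite !length_map; auto).
      destruct (AuxOK_decomp _ _ _ Hnth Hlhs HLlen HXlen Him Hlc HA) as [th' [HL' [Hfr Hc]]].
      assert (Hb : forall p, p < length (cr_conds rho) ->
        er (nth p (map (subst tau) (map (fun c => X (snd c)) (cr_conds rho))) (Var 0))
        = subst th (snd (nth p (cr_conds rho) d))).
      { intros p Hp.
        rewrite (@nth_map_in _ _ (subst tau) _ p (Var 0) (Var 0)) by (rewrite length_map; auto).
        rewrite (@nth_map_in _ _ (fun c => X (snd c)) _ p d (Var 0)) by auto.
        apply erXs. apply Hwcs; auto. }
      assert (Hag : forall x, In x (vars (cr_lhs rho)) -> th' x = th x).
      { rewrite Hlhs. apply agree_lhs. rewrite <- HL', HLer. auto. }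
      assert (Hconds : forall p, p < length (cr_conds rho) ->
        clos_refl_trans _ (step rules) (subst th (fst (nth p (cr_conds rho) d))) (subst th (snd (nth p (cr_conds rho) d)))).
      { intros p Hp. rewrite <- (agree_cond rho th th' Hin Hlhs Hag); auto.
        - rewrite <- Hb; auto.
        - intros q Hq. rewrite <- Hfr by lia. rewrite Hb; auto. lia. }
      rewrite sub_pat, er_Aux by auto. rewrite HLer, erXs by auto. rewrite Hlhs'.
      apply step_root. exists f; auto. rewrite Forall_forall. intros c Hc'.
      destruct (In_nth _ _ d Hc') as [p [Hp <-]]. apply Hconds; auto.
  -
    assert (HA : AuxOK f i j (map (subst tau) (map X ls) ++
       repl (map (subst tau) (map Var xs)) i (map (subst tau) (firstn j (map (fun c => X (snd c)) (cr_conds rho)))))).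
    { specialize (HI _ (st_refl _)). rewrite sub_pat in HI. exact HI. }
    assert (Hlc : length (map (subst tau) (firstn j (map (fun c => X (snd c)) (cr_conds rho)))) = j)
      by (rewrite length_map, length_firstn, length_map; lia).
    destruct (AuxOK_decomp _ _ _ Hnth Hlhs HLlen HXlen Him Hlc HA) as [th' [HL' [Hfr Hc]]].
    assert (Hb : forall p, p < j ->
      er (nth p (map (subst tau) (firstn j (map (fun c => X (snd c)) (cr_conds rho)))) (Var 0))
      = subst th (snd (nth p (cr_conds rho) d))).
    { intros p Hp.
      rewrite (@nth_map_in _ _ (subst tau) _ p (Var 0) (Var 0)) by (rewrite length_firstn, length_map; lia).
      rewrite nth_firstn. replace (p <? j) with true by (symmetry; apply Nat.ltb_lt; lia).
      rewrite (@nth_map_in _ _ (fun c => X (snd c)) _ p d (Var 0)) by lia.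
      apply erXs. apply Hwcs; lia. }
    assert (Hag : forall x, In x (vars (cr_lhs rho)) -> th' x = th x).
    { rewrite Hlhs. apply agree_lhs. rewrite <- HL', HLer. auto. }
    assert (Hlj : length (map (subst tau) (firstn j (map (fun c => X (snd c)) (cr_conds rho)))) = j)
      by (rewrite length_map, length_firstn, length_map; lia).
    split.
    + rewrite sub_pat. apply Inv_App. split.
      * simpl. exists rho, ls, th, (map (subst tau) (map X ls)), (map (subst tau) (map Var xs)),
          (map (subst tau) (firstn j (map (fun c => X (snd c)) (cr_conds rho)) ++ [X (fst (cnth (cr_conds rho) (S j)))])).
        repeat split; auto; try lia.
        -- rewrite length_map, length_app, <- (length_map (subst tau)), Hlj. simpl. lia.
        -- intros p Hp. rewrite map_app, app_nth1 by lia. apply Hb. lia.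
        -- intros p Hp. rewrite map_app. destruct (Nat.lt_ge_cases p j) as [Hpj|Hpj].
           ++ rewrite app_nth1 by lia. rewrite <- (agree_cond rho th th' Hin Hlhs Hag); [apply Hc; lia| |lia].
              intros q Hq. rewrite <- Hfr by lia. rewrite Hb; auto. lia.
           ++ replace p with j by lia. rewrite app_nth2 by lia. rewrite Hlj, Nat.sub_diag. simpl.
              unfold cnth. simpl. rewrite Nat.sub_0_r, erXs. apply rt_refl. apply Hwcs; lia.
      * rewrite <- map_repl, <- map_app. eapply Inv_args_pat; eauto.
        -- apply Forall_app; split; [apply noaux_Xs|]. apply Forall_repl; [apply noaux_vars|].
           apply Forall_app; split; [|constructor; [apply noaux_X|constructor]].
           rewrite Forall_forall. intros a Ha'. apply in_firstn' in Ha'. rewrite <- map_map in Ha'.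
           apply in_map_iff in Ha'. destruct Ha' as [q [<- _]]. apply noaux_X.
        -- rewrite <- vars_App with (f := HF f). rewrite !vars_pat, !flat_vars_X, flat_map_app, !flat_vars_B.
           simpl. rewrite app_nil_r, vars_xi. intros x Hx.
           in_app_split Hx; try in_app_find.
           unfold cnth in Hx. simpl in Hx. rewrite Nat.sub_0_r in Hx. apply Ha in Hx; [|lia].
           rewrite Hlhs, vars_App in Hx. unfold bsof in Hx. in_app_split Hx; in_app_find.
    + right. rewrite !sub_pat, !er_Aux by auto. split; auto.
      rewrite !meas_Aux; try lia; auto.
      * unfold lex. simpl. rewrite HK. lia.
      * rewrite length_map, length_app, <- (length_map (subst tau)), Hlj. simpl. lia.
  -
    split.
    + eapply Inv_from_lhs; eauto.
      * apply noaux_app_pat; simpl; auto. apply Forall_app; split; [apply noaux_Xs|].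
        apply Forall_repl; [apply noaux_vars|]. constructor; [unfold noaux; simpl; auto|constructor].
      * rewrite !vars_pat. simpl. intros x Hx. in_app_split Hx; try in_app_find.
    + right. rewrite !sub_pat, er_HF, er_Aux by auto. split; auto.
      rewrite meas_HF, meas_Aux; try lia; auto.
      * unfold lex. simpl. lia.
      * rewrite length_map, length_app, length_firstn, length_map. simpl. lia.
  -
    assert (HA6 : length (map (subst tau) (repl (map (@Var (@Hsym F)) ys) j [v])) = arity f).
    { rewrite length_map, length_repl; rewrite length_map; simpl; lia. }
    split.
    + eapply Inv_from_lhs; eauto.
      * apply noaux_app_pat; simpl; auto. apply Forall_app; split.
        -- apply Forall_repl; [apply noaux_vars|]. constructor; [eapply AP_noaux; eauto|constructor].
        -- apply Forall_repl; [apply noaux_vars|]. constructor; [unfold noaux; simpl; auto|constructor].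
      * rewrite !vars_pat. simpl. intros x Hx. in_app_split Hx; try in_app_find.
    + right. rewrite !sub_pat, !er_HF by auto. split; auto.
      rewrite !meas_HF; try lia; auto. unfold lex. simpl. lia.
Qed.

End D2.

Section D3.
Context {F : Type} (arity : F -> nat) (rules : F -> list (crule F)).
Hypothesis Hs : strong_cctrs arity rules.
Local Notation H := (term (@Hsym F)).
Local Notation X := (xi rules top).
Local Notation wf := (wf arity).
Local Notation cs_step := (cs_step arity rules).
Local Notation d := (@Var F 0, @Var F 0).
Local Notation er := (er arity).
Local Notation Inv := (Inv arity rules).
Local Notation AuxOK := (AuxOK arity rules).
Local Notation meas := (meas arity rules).

Lemma firstn_mid {A} (l1 l2 : list A) x n : length l1 < n ->
  firstn n (l1 ++ x :: l2) = l1 ++ x :: firstn (n - S (length l1)) l2.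
Proof.
  intros Hl. rewrite firstn_app. rewrite firstn_all2 by lia. f_equal.
  replace (n - length l1) with (S (n - S (length l1))) by lia. reflexivity.
Qed.

Lemma firstn_app_le {A} (l1 l2 : list A) n : n <= length l1 -> firstn n (l1 ++ l2) = firstn n l1.
Proof. intros Hl. rewrite firstn_app. replace (n - length l1) with 0 by lia. simpl. apply app_nil_r. Qed.

Lemma inv_step t t2 : Inv t -> cs_step t t2 -> Inv t2 /\ (er t = er t2 \/ step rules (er t) (er t2)).
Proof.
  intros HI Hst. induction Hst as [t t2 Hr|g ss1 s s' ss2 Hmu Hst IH].
  - destruct (root_case Hs HI Hr) as [HI2 [Hstep|[Heq _]]]; auto.
  - assert (HIs : Inv s).
    { eapply Inv_sub; eauto. econstructor; [apply in_or_app; simpl; auto|constructor]. }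
    destruct (IH HIs) as [HIs' HE].
    assert (Hargs : forall a, In a (ss1 ++ s' :: ss2) -> Inv a).
    { intros a Ha. apply in_app_or in Ha. destruct Ha as [Ha|[<-|Ha]]; auto.
      - apply (Inv_sub HI). apply st_arg with a; [apply in_or_app; left; exact Ha|constructor].
      - apply (Inv_sub HI). apply st_arg with a; [apply in_or_app; right; right; exact Ha|constructor]. }
    pose proof (HI _ (st_refl _)) as Hsh.
    destruct g as [| |f|f i j].
    + discriminate.
    + discriminate.
    + split. apply Inv_App. split; simpl; auto.
      unfold mu in Hmu. apply andb_prop in Hmu. destruct Hmu as [_ Hmu]. apply Nat.leb_le in Hmu.
      simpl. rewrite !map_app. simpl. rewrite !firstn_mid by (rewrite length_map; lia).
      destruct HE as [HE|HE]; [left; rewrite HE; auto|right].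
      rewrite !length_map. apply step_ctx; auto.
    + simpl in Hsh.
      destruct Hsh as [rho [ls [th [Lh [Xl [cs' [Hn [Hi [Hl [Hj [E [HLh [HXl [Hcs [HL [Hfr Hc]]]]]]]]]]]]]]]].
      unfold mu in Hmu. apply Nat.eqb_eq in Hmu.
      assert (Hmi : i - 1 < m rules f) by (unfold m; apply nth_error_Some; rewrite Hn; discriminate).
      assert (Ecs : cs' = firstn (j-1) cs' ++ [nth (j-1) cs' (Var 0)]).
      { rewrite <- firstn_S_last by lia. rewrite firstn_all2; auto. lia. }
      assert (E2 : ss1 ++ s :: ss2 = (Lh ++ firstn (i-1) Xl ++ firstn (j-1) cs') ++ nth (j-1) cs' (Var 0) :: skipn i Xl).
      { rewrite E. unfold repl. rewrite Ecs at 1. rewrite <- !app_assoc. reflexivity. }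
      assert (Hlen1 : length ss1 = length (Lh ++ firstn (i-1) Xl ++ firstn (j-1) cs')).
      { rewrite !length_app, !length_firstn. lia. }
      destruct (app_eq_len _ _ _ _ Hlen1 E2) as [Ess1 E3]. injection E3 as Es Ess2.
      split.
      * apply Inv_App. split; auto. simpl.
        exists rho, ls, th, Lh, Xl, (firstn (j-1) cs' ++ [s']).
        repeat split; auto. all: try lia.
        -- rewrite Ess1, Ess2. unfold repl. rewrite <- !app_assoc. reflexivity.
        -- rewrite length_app, length_firstn. simpl. lia.
        -- intros p Hp. rewrite app_nth1 by (rewrite length_firstn; lia). rewrite nth_firstn.
           replace (p <? j - 1) with true by (symmetry; apply Nat.ltb_lt; lia). apply Hfr; auto.
        -- intros p Hp. destruct (Nat.lt_ge_cases p (j-1)) as [Hpj|Hpj].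
           ++ rewrite app_nth1 by (rewrite length_firstn; lia). rewrite nth_firstn.
              replace (p <? j - 1) with true by (symmetry; apply Nat.ltb_lt; lia). apply Hc; auto.
           ++ replace p with (j-1) by lia. rewrite app_nth2 by (rewrite length_firstn; lia).
              rewrite length_firstn. replace (j - 1 - Nat.min (j - 1) (length cs')) with 0 by lia.
              simpl. apply (rt_trans _ _ _ (er s)); [rewrite Es; apply Hc; lia|].
              destruct HE as [HE|HE]; [rewrite HE; apply rt_refl|apply rt_step; auto].
      * left. simpl. rewrite !map_app. simpl. rewrite !firstn_app_le; auto;
        rewrite length_map; lia.
Qed.

End D3.

Section D4.
Context {F : Type} (arity : F -> nat) (rules : F -> list (crule F)).
Hypothesis Hs : strong_cctrs arity rules.
Local Notation H := (term (@Hsym F)).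
Local Notation X := (xi rules top).
Local Notation wf := (wf arity).
Local Notation cs_step := (cs_step arity rules).
Local Notation d := (@Var F 0, @Var F 0).
Local Notation er := (er arity).
Local Notation Inv := (Inv arity rules).
Local Notation AuxOK := (AuxOK arity rules).
Local Notation meas := (meas arity rules).

Definition SN (t : H) := Acc (fun a b => cs_step b a) t.

Lemma inv_rt t t' : Inv t -> clos_refl_trans _ cs_step t t' -> Inv t' /\ clos_refl_trans _ (step rules) (er t) (er t').
Proof.
  intros HI Hr. revert HI. induction Hr as [a b Hab| |]; intros HI.
  - destruct (inv_step Hs HI Hab) as [HI' [E|E]]; split; auto. rewrite E; apply rt_refl. apply rt_step; auto.
  - split; auto. apply rt_refl.
  - destruct (IHHr1 HI) as [H1 H2]. destruct (IHHr2 H1) as [H3 H4]. split; auto. eapply rt_trans; eauto.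
Qed.

Definition lstep (l l' : list H) : Prop :=
  exists l1 s s' l2, l = l1 ++ s :: l2 /\ l' = l1 ++ s' :: l2 /\ cs_step s s'.

Lemma Acc_lstep_cons a : SN a -> forall l, Acc (fun x y => lstep y x) l -> Acc (fun x y => lstep y x) (a :: l).
Proof.
  induction 1 as [a _ IHa]. intros l Hl. induction Hl as [l Hl' IHl]. constructor.
  intros y [l1 [s [s' [l2 [E1 [E2 Hst]]]]]]. destruct l1 as [|x l1']; simpl in *.
  - injection E1 as -> ->. subst y. apply IHa; auto. constructor; auto.
  - injection E1 as -> ->. subst y. apply IHl. exists l1', s, s', l2. auto.
Qed.

Lemma Acc_lstep l : (forall a, In a l -> SN a) -> Acc (fun x y => lstep y x) l.
Proof.
  induction l as [|a l IH]; intros Ha.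
  - constructor. intros y [l1 [s [s' [l2 [E _]]]]]. destruct l1; discriminate.
  - apply Acc_lstep_cons. apply Ha; simpl; auto. apply IH. intros; apply Ha; simpl; auto.
Qed.

Lemma lstep_len l l' : lstep l l' -> length l' = length l.
Proof. intros [l1 [s [s' [l2 [-> [-> _]]]]]]. rewrite !length_app. simpl. auto. Qed.

Lemma lsteps_len l l' : clos_refl_trans _ lstep l l' -> length l' = length l.
Proof. induction 1; auto. apply lstep_len; auto. congruence. Qed.

Lemma split_lt {A} (l1 l2 A1 B : list A) s : l1 ++ s :: l2 = A1 ++ B -> length l1 < length A1 ->
  exists A2, A1 = l1 ++ s :: A2 /\ l2 = A2 ++ B.
Proof.
  revert A1. induction l1 as [|x l1 IH]; intros A1 E Hl; destruct A1 as [|y A1]; simpl in *; try lia.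
  - injection E as -> ->. exists A1; auto.
  - injection E as -> E. destruct (IH A1 E) as [A2 [-> ->]]; [lia|]. exists A2; auto.
Qed.

Lemma lsteps_rt f as_ as' labs : length as_ <= arity f -> clos_refl_trans _ lstep as_ as' ->
  clos_refl_trans _ cs_step (App (HF f) (as_ ++ labs)) (App (HF f) (as' ++ labs)).
Proof.
  intros Hl Hr. induction Hr as [a b Hab| |a b c H1 IH1 H2 IH2].
  - apply rt_step. destruct Hab as [l1 [s [s' [l2 [-> [-> Hst]]]]]]. rewrite <- !app_assoc. simpl.
    apply csctx_arg; auto. unfold mu. rewrite length_app in Hl. simpl in Hl.
    apply andb_true_intro; split; apply Nat.leb_le; lia.
  - apply rt_refl.
  - eapply rt_trans; [apply IH1; auto|]. apply IH2. rewrite (lsteps_len H1). auto.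
Qed.

Lemma L1 g pre post c : (forall p, mu arity g p = true -> p = S (length pre)) -> SN c ->
  (forall c', clos_refl_trans _ cs_step c c' -> forall t2, xi_root arity rules (App g (pre ++ c' :: post)) t2 -> SN t2) ->
  SN (App g (pre ++ c :: post)).
Proof.
  intros Hm Hc. induction Hc as [c _ IH]. intros Hroot. constructor. intros y Hy.
  remember (App g (pre ++ c :: post)) as T eqn:ET. destruct Hy as [T y Hr|g' ss1 s s' ss2 Hmu Hst].
  - subst T. apply (Hroot c (rt_refl _ _ _)); auto.
  - injection ET as <- E. apply Hm in Hmu. injection Hmu as Hmu.
    destruct (app_eq_len _ _ _ _ Hmu E) as [-> E2]. injection E2 as -> ->.
    apply IH; auto. intros c' Hc' t2 Ht2. apply (Hroot c'); auto. eapply rt_trans; [apply rt_step|]; eauto.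
Qed.

Lemma L2 f labs as_ : length as_ <= arity f -> (length as_ < arity f -> labs = []) ->
  Acc (fun x y => lstep y x) as_ ->
  (forall as', clos_refl_trans _ lstep as_ as' -> forall t2, xi_root arity rules (App (HF f) (as' ++ labs)) t2 -> SN t2) ->
  SN (App (HF f) (as_ ++ labs)).
Proof.
  intros Hl1 Hl2 Hacc. induction Hacc as [as_ _ IH]. intros Hroot. constructor. intros y Hy.
  remember (App (HF f) (as_ ++ labs)) as T eqn:ET. destruct Hy as [T y Hr|g' ss1 s s' ss2 Hmu Hst].
  - subst T. apply (Hroot as_ (rt_refl _ _ _)); auto.
  - injection ET as Eg E. subst g'. unfold mu in Hmu. apply andb_prop in Hmu. destruct Hmu as [_ Hmu].
    apply Nat.leb_le in Hmu.
    assert (Hlt : length ss1 < length as_).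
    { destruct (Nat.lt_ge_cases (length as_) (arity f)) as [Hlt|Hge].
      - specialize (Hl2 Hlt). subst labs. rewrite app_nil_r in E. subst as_. rewrite length_app. simpl. lia.
      - lia. }
    destruct (@split_lt _ ss1 ss2 as_ labs s E Hlt) as [A2 [-> ->]].
    assert (Hst' : lstep (ss1 ++ s :: A2) (ss1 ++ s' :: A2)) by (exists ss1, s, s', A2; auto).
    replace (ss1 ++ s' :: A2 ++ labs) with ((ss1 ++ s' :: A2) ++ labs) by (rewrite <- app_assoc; reflexivity). apply IH; auto.
    + rewrite (lstep_len Hst'). auto.
    + rewrite (lstep_len Hst'). auto.
    + intros as' Has t2 Ht2. apply (Hroot as'); auto. eapply rt_trans; [apply rt_step|]; eauto.
Qed.

Lemma no_step_var x t : ~ cs_step (Var x) t.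
Proof.
  intros Hst. remember (Var x) as T. destruct Hst as [T t [l [r [tau [[_ [f [i [rho [ls [xs [_ [_ [_ [_ Hc]]]]]]]]]] [E _]]]]]|]; [|discriminate].
  subst T. cbv zeta in Hc.
  destruct Hc as [[_ [-> _]]|[[_ [-> _]]|[[_ [-> _]]|[[j [_ [-> _]]]|[[j [v [_ [_ [-> _]]]]]|[ys [j [v [_ [_ [_ [-> _]]]]]]]]]]]];
  discriminate.
Qed.

Lemma no_step_const g args t : (g = HBot \/ g = HTop) -> ~ cs_step (App g args) t.
Proof.
  intros Hg Hst. remember (App g args) as T. destruct Hst as [T t [l [r [tau [[_ [f [i [rho [ls [xs [_ [_ [_ [_ Hc]]]]]]]]]] [E _]]]]]|g' ss1 s s' ss2 Hmu _].
  - subst T. cbv zeta in Hc.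
    destruct Hc as [[_ [-> _]]|[[_ [-> _]]|[[_ [-> _]]|[[j [_ [-> _]]]|[[j [v [_ [_ [-> _]]]]]|[ys [j [v [_ [_ [_ [-> _]]]]]]]]]]]];
    simpl in E; injection E as E1 _; destruct Hg; subst; discriminate.
  - injection HeqT as -> _. destruct Hg; subst; discriminate.
Qed.

End D4.

Section D5.
Context {F : Type} (arity : F -> nat) (rules : F -> list (crule F)).
Hypothesis Hs : strong_cctrs arity rules.
Local Notation H := (term (@Hsym F)).
Local Notation X := (xi rules top).
Local Notation wf := (wf arity).
Local Notation cs_step := (cs_step arity rules).
Local Notation d := (@Var F 0, @Var F 0).
Local Notation er := (er arity).
Local Notation Inv := (Inv arity rules).
Local Notation AuxOK := (AuxOK arity rules).
Local Notation meas := (meas arity rules).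
Local Notation SN := (SN arity rules).

Definition psub (b a : term F) := exists f ts u, a = App f ts /\ In u ts /\ subterm_eq b u.
Definition Rel (a b : term F) := step rules a b \/ sqsup rules a b \/ psub b a.
Definition SS (a b : term F) := step rules a b \/ sqsup rules a b.

Fixpoint size (t : term F) : nat :=
  match t with Var _ => 1 | App _ ts => S (list_sum (map size ts)) end.

Lemma size_in u ts : In u ts -> size u <= list_sum (map size ts).
Proof. induction ts as [|a ts IH]; simpl; [intros []|]. intros [->|Hu]; [lia|]. specialize (IH Hu). lia. Qed.

Lemma size_sub y u : subterm_eq y u -> size y <= size u.
Proof. induction 1; auto. simpl. pose proof (size_in _ _ H). lia. Qed.

Lemma acc_sub s : Acc (fun a b => SS b a) s -> forall t, subterm_eq t s -> Acc (fun a b => Rel b a) t.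
Proof.
  induction 1 as [s _ IHs].
  assert (Hn : forall n t, size t < n -> subterm_eq t s -> Acc (fun a b => Rel b a) t).
  { induction n as [|n IHn]; intros t Hsz Ht; [lia|]. constructor. intros y [Hy|[Hy|Hy]].
    - destruct (step_sub Ht Hy) as [s' [H1 H2]]. eapply IHs; eauto. left; auto.
    - apply (IHs y). right. eapply sqsup_sub; eauto. constructor.
    - destruct Hy as [f [ts [u [-> [Hu Hyu]]]]]. apply IHn.
      + pose proof (size_sub Hyu). pose proof (size_in _ _ Hu). simpl in Hsz. lia.
      + eapply subterm_trans; [exact Hyu|]. eapply subterm_trans; [|exact Ht]. econstructor; eauto. constructor. }
  intros t Ht. apply (Hn (S (size t))); auto.
Qed.

Lemma acc_rel s : quasi_decreasing arity rules -> wf s -> Acc (fun a b => Rel b a) s.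
Proof.
  intros HQ Hw. apply acc_sub with s; [|constructor].
  apply not_chain_Acc. apply HQ; auto.
Qed.

Lemma rt_step_rel a b : clos_refl_trans _ (step rules) a b -> clos_refl_trans _ Rel a b.
Proof. apply rt_mono. intros; left; auto. Qed.

Lemma rt_ct {A} (R : A -> A -> Prop) a b c : clos_refl_trans _ R a b -> R b c -> clos_trans _ R a c.
Proof.
  intros H1 H2. apply clos_rt_rt1n in H1. induction H1. apply t_step; auto.
  eapply t_trans; [apply t_step; eauto|]. auto.
Qed.

Lemma ct_rt_ct {A} (R : A -> A -> Prop) a b c : clos_trans _ R a b -> clos_refl_trans _ R b c -> clos_trans _ R a c.
Proof.
  intros H1 H2. apply clos_rt_rtn1 in H2. induction H2; auto. eapply t_trans; eauto. apply t_step; auto.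
Qed.

Lemma main_Q s : Acc (fun a b => Rel b a) s ->
  forall t, Inv t -> clos_refl_trans _ (step rules) s (er t) -> SN t.
Proof.
  intros Hacc. apply Acc_flip_ct in Hacc. induction Hacc as [s _ IH].
  assert (HR : forall x y, clos_refl_trans _ (step rules) s x -> Rel x y -> clos_trans _ Rel s y).
  { intros x y H1 H2. eapply rt_ct; eauto. apply rt_step_rel; auto. }
  intros t0 HI0 Hr0.
  assert (Hm : forall mp t, meas t = mp -> Inv t -> clos_refl_trans _ (step rules) s (er t) -> SN t).
  2:{ eapply Hm; eauto. }
  intros mp. induction mp as [mp IHm] using (well_founded_induction (lex_wf)).
  intros t Hmt HI Hr.
  assert (Hroot : forall t' t2, clos_refl_trans _ cs_step t t' -> meas t' = meas t ->
            xi_root arity rules t' t2 -> SN t2).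
  { intros t' t2 Htt' Hmm Hx. destruct (inv_rt Hs HI Htt') as [HI' Hr'].
    destruct (root_case Hs HI' Hx) as [HI2 [Hst|[Heq Hlex]]].
    - apply (IH (er t2)); auto. apply (HR (er t')). eapply rt_trans; eauto. left; auto.
      apply rt_refl.
    - apply (IHm (meas t2)); auto. rewrite <- Hmt, <- Hmm; auto. rewrite Heq. eapply rt_trans; eauto. }
  destruct t as [x|g args].
  - constructor. intros y Hy. exfalso. eapply no_step_var; eauto.
  - destruct g as [| |f|f i j].
    + constructor. intros y Hy. exfalso. eapply no_step_const; [left; reflexivity|eauto].
    + constructor. intros y Hy. exfalso. eapply no_step_const; [right; reflexivity|eauto].
    + rewrite <- (firstn_skipn (arity f) args).
      apply L2.
      * rewrite length_firstn. lia.
      * rewrite length_firstn. intros Hl. apply skipn_all2. lia.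
      * apply Acc_lstep. intros a Ha. apply (IH (er a)).
        -- apply (HR (er (App (HF f) args))); auto. right; right.
           exists f, (firstn (arity f) (map er args)), (er a). split; auto. split; [|constructor].
           rewrite firstn_map. apply in_map; auto.
        -- eapply Inv_sub; eauto. econstructor; [eapply in_firstn'; eauto|constructor].
        -- apply rt_refl.
      * intros as' Has t2 Ht2. apply (Hroot (App (HF f) (as' ++ skipn (arity f) args))); auto.
        -- rewrite <- (firstn_skipn (arity f) args) at 1. apply lsteps_rt; auto.
           rewrite length_firstn; lia.
        -- rewrite <- (firstn_skipn (arity f) args) at 2. simpl. f_equal.
           pose proof (lsteps_len Has) as Hl.
           rewrite !skipn_app. rewrite (skipn_all2 as') by (rewrite Hl, length_firstn; lia).
           rewrite (skipn_all2 (firstn (arity f) args)) by (rewrite length_firstn; lia).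
           rewrite Hl. reflexivity.
    + pose proof (HI _ (st_refl _)) as Hsh. simpl in Hsh.
      destruct Hsh as [rho [ls [th [Lh [Xl [cs' [Hn [Hi [Hl [Hj [E [HLh [HXl [Hcs [HL [Hfr Hc]]]]]]]]]]]]]]]].
      assert (Hmi : i - 1 < m rules f) by (unfold m; apply nth_error_Some; rewrite Hn; discriminate).
      assert (Ecs : cs' = firstn (j-1) cs' ++ [nth (j-1) cs' (Var 0)]).
      { rewrite <- firstn_S_last by lia. rewrite firstn_all2; auto. lia. }
      set (pre := Lh ++ firstn (i-1) Xl ++ firstn (j-1) cs').
      assert (E2 : args = pre ++ nth (j-1) cs' (Var 0) :: skipn i Xl).
      { rewrite E. unfold repl, pre. rewrite Ecs at 1. rewrite <- !app_assoc. reflexivity. }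
      assert (Hlp : length pre = arity f + (i - 1) + (j - 1)).
      { unfold pre. rewrite !length_app, !length_firstn. lia. }
      assert (Hin : In rho (rules f)) by (eapply nth_error_In; eauto).
      rewrite E2. apply L1.
      * intros p Hp. unfold mu in Hp. apply Nat.eqb_eq in Hp. lia.
      * apply (IH (subst th (fst (nth (j-1) (cr_conds rho) d)))).
        -- apply (HR (er (App (HAux f i j) args))); auto. right; left.
           exists (subst th (cr_lhs rho)), rho, th, (j-1). repeat split; try lia.
           ++ rewrite E, er_Aux by auto. rewrite HL, Hl. constructor.
           ++ exists f; auto.
           ++ intros q Hq. rewrite <- Hfr by lia. apply Hc; lia.
        -- eapply Inv_sub; eauto. rewrite E2. econstructor; [apply in_or_app; right; left; reflexivity|constructor].
        -- apply Hc. lia.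
      * intros c' Hc' t2 Ht2. apply (Hroot (App (HAux f i j) (pre ++ c' :: skipn i Xl))); auto.
        -- rewrite E2. apply ctx_rt; auto. unfold mu. apply Nat.eqb_eq. lia.
        -- rewrite E2.
           assert (Ea : forall c0, pre ++ c0 :: skipn i Xl = Lh ++ repl Xl i (firstn (j-1) cs' ++ [c0])).
           { intros c0. unfold pre, repl. rewrite <- !app_assoc. reflexivity. }
           rewrite !Ea. rewrite !meas_Aux; auto; try lia;
           rewrite length_app, length_firstn; simpl; lia.
Qed.

Lemma wf_er_zeta s : wfG arity rules s -> wf (er (zeta s)).
Proof.
  induction s using term_ind2; intros Hw; [unfold wf; simpl; auto|].
  unfold wfG in Hw. apply term_all_App in Hw. destruct Hw as [Hf Hw].
  assert (Hts : forall t, In t ts -> wf (er (zeta t))).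
  { intros t Ht. apply H; auto. rewrite Forall_forall in Hw; apply Hw; auto. }
  destruct f as [f|f R]; simpl.
  - destruct Hf as [_ Hf]. rewrite map_map, firstn_all2 by (rewrite length_map; lia).
    unfold wf. apply term_all_App. rewrite length_map. split; auto.
    rewrite Forall_forall. intros a Ha. apply in_map_iff in Ha. destruct Ha as [t [<- Ht]]. apply Hts; auto.
  - destruct Hf as [_ [_ Hf]]. rewrite map_app, map_map, firstn_app_exact by (rewrite length_map; lia).
    unfold wf. apply term_all_App. rewrite length_map. split; auto.
    rewrite Forall_forall. intros a Ha. apply in_map_iff in Ha. destruct Ha as [t [<- Ht]]. apply Hts; auto.
Qed.

Lemma noaux_zeta (s : term (@Gsym F)) : noaux (zeta s).
Proof.
  induction s using term_ind2; [unfold noaux; simpl; auto|].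
  destruct f as [f|f R]; simpl; apply noaux_app_pat; simpl; auto.
  - rewrite Forall_forall. intros a Ha. apply in_map_iff in Ha. destruct Ha as [t [<- Ht]]. auto.
  - apply Forall_app. split.
    + rewrite Forall_forall. intros a Ha. apply in_map_iff in Ha. destruct Ha as [t [<- Ht]]. auto.
    + rewrite Forall_forall. intros a Ha. apply in_map_iff in Ha. destruct Ha as [b [<- _]].
      destruct b; unfold noaux; simpl; auto.
Qed.

Lemma SN_no_chain t : SN t -> forall u : nat -> H, u 0 = t -> (forall k, cs_step (u k) (u (S k))) -> False.
Proof.
  induction 1 as [t _ IH]. intros u Hu0 Hu. subst t. apply (IH (u 1) (Hu 0) (fun k => u (S k))); auto.
Qed.

Theorem dir2 : quasi_decreasing arity rules ->
  cs_terminating_on arity rules (fun t => exists s, wfG arity rules s /\ t = zeta s).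
Proof.
  intros HQ t [s0 [Hw ->]] [u [Hu0 Hu]].
  assert (HSN : SN (zeta s0)).
  { apply (main_Q (acc_rel _ HQ (wf_er_zeta _ Hw))). apply noaux_Inv, noaux_zeta. apply rt_refl. }
  exact (SN_no_chain HSN u Hu0 Hu).
Qed.

End D5.


Theorem corollary5 (F : Type) (arity : F -> nat) (rules : F -> list (crule F)) :
  strong_cctrs arity rules ->
  (quasi_decreasing arity rules <->
   cs_terminating_on arity rules
     (fun t => exists s, wfG arity rules s /\ t = zeta s)).
Proof.
  intros Hs. split; intros HH.
  - eapply dir2; eauto.
  - eapply dir1; eauto.
Qed.
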